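(* Let $\boldsymbol{M}$ be a weight sequence satisfying $\operatorname{(sm)}$ with constants $C_0>0$, $H>1$ (i.e. $\log(m_{p+1}/m_p)\le C_0H^{p+1}$ for all $p\in\mathbb{N}_0$). Then for every $h>0$ one has $\mathcal{L}(C_{\boldsymbol{M},h}(0,\infty))\subset\mathcal{A}_{\boldsymbol{M}_{+1},Hh}(\mathbb{H})$, and $\mathcal{L}\colon C_{\boldsymbol{M},h}(0,\infty)\to\mathcal{A}_{\boldsymbol{M}_{+1},Hh}(\mathbb{H})$ is continuous. Consequently, $\mathcal{L}\colon C_{\{\boldsymbol{M}\}}(0,\infty)\to\mathcal{A}_{\{\boldsymbol{M}_{+1}\}}(\mathbb{H})$ is well-defined and continuous; moreover, it is injective.
   Context: Sequences are of positive reals indexed by $\mathbb{N}_0$; $m_p=M_{p+1}/M_p$. Weight sequence: $M_0=1$, $M_p^2\le M_{p-1}M_{p+1}$ ($p\ge1$), $m_p\to\infty$. $\boldsymbol{M}_{+1}=(M_{p+1})_p$. $\mathbb{H}$ is the open upper half-plane. For a sequence $\boldsymbol{N}$ and $h>0$, $\mathcal{A}_{\boldsymbol{N},h}(\mathbb{H})$ is the Banach space of holomorphic $f$ on $\mathbb{H}$ with norm $\sup_p\sup_{z\in\mathbb{H}}|f^{(p)}(z)|/(h^pN_p)<\infty$, and $\mathcal{A}_{\{\boldsymbol{N}\}}(\mathbb{H})=\bigcup_h\mathcal{A}_{\boldsymbol{N},h}(\mathbb{H})$ (inductive limit). $C_{\boldsymbol{M},h}(0,\infty)$ is the Banach space of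 continuous $\varphi$ on $(0,\infty)$ with norm $\sup_p\sup_{x>0}x^p|\varphi(x)|/(h^pM_p)<\infty$ (no support condition), $C_{\{\boldsymbol{M}\}}(0,\infty)=\bigcup_hC_{\boldsymbol{M},h}(0,\infty)$ (inductive limit). The Laplace transform is $\mathcal{L}(\varphi)(\zeta)=\int_0^\infty\varphi(x)e^{ix\zeta}\,dx$, $\zeta\in\overline{\mathbb{H}}$, considered on $\mathbb{H}$. *)

(* Defs.v *)
From Stdlib Require Import Reals.
From Coquelicot Require Import Coquelicot.
Open Scope R_scope.

Definition mq (M : nat -> R) (p : nat) : R := M (S p) / M p.

Definition weight_seq (M : nat -> R) : Prop :=
  (forall p, 0 < M p) /\ M 0%nat = 1 /\
  (forall p, (1 <= p)%nat -> (M p) ^ 2 <= M (p - 1)%nat * M (S p)) /\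
  is_lim_seq (mq M) p_infty.

Definition cond_sm (M : nat -> R) (C0 H : R) : Prop :=
  forall p : nat, ln (mq M (S p) / mq M p) <= C0 * H ^ (S p).

Definition shift1 (M : nat -> R) : nat -> R := fun p => M (S p).

Definition upper (z : C) : Prop := 0 < Im z.

Definition cexp (z : C) : C := (exp (Re z) * cos (Im z), exp (Re z) * sin (Im z)).

(* phi continuous on (0,oo) and  x^p |phi x| <= B h^p M_p  for all p, x > 0;
   the least such B is the norm of phi in C_{M,h}(0,oo). *)
Definition CMh_bound (M : nat -> R) (h : R) (phi : R -> C) (B : R) : Prop :=
  (forall x, 0 < x -> continuous phi x) /\
  forall (p : nat) (x : R), 0 < x -> x ^ p * Cmod (phi x) <= B * h ^ p * M p.

Definition in_CMh (M : nat -> R) (h : R) (phi : R -> C) : Prop :=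
  exists B, CMh_bound M h phi B.

Definition in_CM (M : nat -> R) (phi : R -> C) : Prop :=
  exists h, 0 < h /\ in_CMh M h phi.

Definition lap_integrand (phi : R -> C) (zeta : C) : R -> C :=
  fun x => Cmult (phi x) (cexp (Cmult (Cmult Ci (RtoC x)) zeta)).

Definition Laplace (phi : R -> C) (zeta : C) : C :=
  @RInt_gen C_R_CompleteNormedModule (lap_integrand phi zeta) (at_right 0) (Rbar_locally p_infty).

Definition Laplace_defined (phi : R -> C) : Prop :=
  forall zeta, upper zeta ->
    @ex_RInt_gen C_R_NormedModule (lap_integrand phi zeta) (at_right 0) (Rbar_locally p_infty).

Definition derivs_on (U : C -> Prop) (f : C -> C) (g : nat -> C -> C) : Prop :=
  (forall z, U z -> g 0%nat z = f z) /\
  (forall (n : nat) (z : C), U z ->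
     @is_derive C_AbsRing C_NormedModule (g n) z (g (S n) z)).

Definition in_ANh (N : nat -> R) (h : R) (f : C -> C) : Prop :=
  exists g : nat -> C -> C, derivs_on upper f g /\
    exists B, forall (p : nat) (z : C), upper z -> Cmod (g p z) <= B * h ^ p * N p.

Definition in_AN (N : nat -> R) (f : C -> C) : Prop :=
  exists h, 0 < h /\ in_ANh N h f.

(* Main.v *)
Require Import Defs.
From Stdlib Require Import Reals Lra Lia Psatz.
From Coquelicot Require Import Coquelicot.
Open Scope R_scope.


Lemma CR_minus (x y : C) : @minus C_R_NormedModule x y = Cminus x y.
Proof. destruct x, y; reflexivity. Qed.
Lemma CR_plus (x y : C) : @plus C_R_NormedModule x y = Cplus x y.
Proof. destruct x, y; reflexivity. Qed.
Lemma CR_norm (x : C) : @norm _ C_R_NormedModule x = Cmod x.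
Proof. symmetry; apply Cmod_norm. Qed.
Lemma CRc_minus (x y : C) : @minus C_R_CompleteNormedModule x y = Cminus x y.
Proof. destruct x, y; reflexivity. Qed.
Lemma CRc_plus (x y : C) : @plus C_R_CompleteNormedModule x y = Cplus x y.
Proof. destruct x, y; reflexivity. Qed.

Lemma Calg1 (x y z : C) : Cminus (Cplus x (Cplus y z)) y = Cplus x z.
Proof. destruct x, y, z; unfold Cminus, Cplus, Copp; simpl; f_equal; ring. Qed.
Lemma Calg2 (x y z : C) : Cminus x y = Cplus (Cminus x z) (Copp (Cminus y z)).
Proof. destruct x, y, z; unfold Cminus, Cplus, Copp; simpl; f_equal; ring. Qed.

Definition FF := filter_prod (at_right 0) (Rbar_locally p_infty).
Lemma FF_proper : ProperFilter FF.
Proof. apply filter_prod_proper. Qed.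

Lemma Cmod_RInt_le (f : R -> C) (g : R -> R) a b :
  a <= b -> (forall x, a <= x <= b -> continuous f x) ->
  (forall x, a <= x <= b -> continuous g x) ->
  (forall x, a <= x <= b -> Cmod (f x) <= g x) ->
  Cmod (@RInt C_R_CompleteNormedModule f a b) <= RInt g a b.
Proof.
  intros Hab Hf Hg Hfg.
  rewrite <- CR_norm.
  apply (norm_RInt_le f g a b).
  - exact Hab.
  - intros x Hx; rewrite CR_norm; auto.
  - apply (RInt_correct (V := C_R_CompleteNormedModule)).
    apply ex_RInt_continuous; intros z Hz.
    rewrite Rmin_left in Hz by lra; rewrite Rmax_right in Hz by lra; auto.
  - apply (RInt_correct (V := R_CompleteNormedModule)). apply ex_RInt_continuous; intros z Hz.
    rewrite Rmin_left in Hz by lra; rewrite Rmax_right in Hz by lra; auto.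
Qed.

Lemma at_right0_intro (P : R -> Prop) (d : R) : 0 < d ->
  (forall x, 0 < x < d -> P x) -> at_right 0 P.
Proof.
  intros Hd H. exists (mkposreal d Hd). intros y Hy Hy0. apply H. split; auto.
  simpl in Hy. unfold ball in Hy; simpl in Hy. unfold AbsRing_ball, abs, minus, plus, opp in Hy; simpl in Hy.
  rewrite Ropp_0, Rplus_0_r in Hy. apply Rabs_def2 in Hy. lra.
Qed.

Lemma at_right0_elim (P : R -> Prop) : at_right 0 P ->
  exists d, 0 < d /\ forall x, 0 < x < d -> P x.
Proof.
  intros [d Hd]. exists d. split. apply cond_pos. intros x Hx. apply Hd. 2: lra.
  unfold ball; simpl. unfold AbsRing_ball, abs, minus, plus, opp; simpl.
  rewrite Ropp_0, Rplus_0_r. apply Rabs_def1; lra.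
Qed.

Lemma ig_ex (f : R -> C) (g : R -> R) (Ig : R) :
 (forall x, 0 < x -> continuous f x) -> (forall x, 0 < x -> continuous g x) ->
 (forall x, 0 < x -> Cmod (f x) <= g x) ->
 is_RInt_gen g (at_right 0) (Rbar_locally p_infty) Ig ->
 exists l : C, @is_RInt_gen C_R_NormedModule f (at_right 0) (Rbar_locally p_infty) l /\ Cmod l <= Ig.
Proof.
  intros Hf Hg Hfg Hgi.
  assert (exf : forall a b, 0 < a -> 0 < b -> ex_RInt (V := C_R_CompleteNormedModule) f a b).
  { intros a b Ha Hb. apply ex_RInt_continuous. intros z Hz. apply Hf.
    destruct (Rle_dec a b); [rewrite Rmin_left in Hz by lra|rewrite Rmin_right in Hz by lra]; lra. }
  assert (exg : forall a b, 0 < a -> 0 < b -> ex_RInt g a b).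
  { intros a b Ha Hb. apply (ex_RInt_continuous (V := R_CompleteNormedModule)). intros z Hz. apply Hg.
    destruct (Rle_dec a b); [rewrite Rmin_left in Hz by lra|rewrite Rmin_right in Hz by lra]; lra. }
  set (Fn := fun ab : R * R => @RInt C_R_CompleteNormedModule f (fst ab) (snd ab)).
  assert (Hcv : exists y : C_R_CompleteNormedModule, filterlim Fn FF (locally y)).
  { apply (proj1 (filterlim_locally_closely (F := FF) (U := C_R_CompleteNormedModule) Fn)).
    apply filterlim_closely. 
    intros eps.
    assert (He4 : 0 < eps / 4) by (generalize (cond_pos eps); lra).
    destruct (Hgi (ball Ig (eps/4))) as [Q Rr HQ HR HQR].
    { apply (locally_ball Ig (mkposreal _ He4)). }
    destruct (at_right0_elim _ HQ) as [d [Hd HQd]].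
    destruct HR as [M HM].
    set (a0 := d / 2). set (b0 := Rmax M a0 + 1).
    assert (Ha0 : 0 < a0) by (unfold a0; lra).
    assert (Hb0 : a0 < b0) by (unfold b0; generalize (Rmax_r M a0); lra).
    assert (HMb0 : M < b0) by (unfold b0; generalize (Rmax_l M a0); lra).
    assert (Gv : forall a b, 0 < a < d -> M < b -> Rabs (RInt g a b - Ig) < eps / 4).
    { intros a b Ha Hb. destruct (HQR a b) as [y [Hy1 Hy2]]. apply HQd; lra. apply HM; lra.
      simpl in Hy1. rewrite (is_RInt_unique _ _ _ _ Hy1).
      unfold ball in Hy2; simpl in Hy2; unfold AbsRing_ball, abs, minus, plus, opp in Hy2; simpl in Hy2.
      exact Hy2. }
    assert (key : forall a b, 0 < a < a0 -> b0 < b -> Cmod (Cminus (Fn (a, b)) (Fn (a0, b0))) < eps / 2).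
    { intros a b Ha Hb. unfold Fn; simpl.
      rewrite <- (RInt_Chasles (V := C_R_CompleteNormedModule) f a a0 b) by (apply exf; lra).
      rewrite <- (RInt_Chasles (V := C_R_CompleteNormedModule) f a0 b0 b) by (apply exf; lra).
      rewrite !CRc_plus.
      rewrite Calg1.
      eapply Rle_lt_trans. apply Cmod_triangle.
      eapply Rle_lt_trans. apply Rplus_le_compat.
      apply (Cmod_RInt_le f g a a0). lra. intros; apply Hf; lra. intros; apply Hg; lra. intros; apply Hfg; lra.
      apply (Cmod_RInt_le f g b0 b). lra. intros; apply Hf; lra. intros; apply Hg; lra. intros; apply Hfg; lra.
      assert (E1 : RInt g a b = RInt g a a0 + (RInt g a0 b0 + RInt g b0 b)).
      { rewrite <- (RInt_Chasles (V := R_CompleteNormedModule) g a a0 b) by (apply exg; lra).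
        rewrite <- (RInt_Chasles (V := R_CompleteNormedModule) g a0 b0 b) by (apply exg; lra). reflexivity. }
      assert (G1 : Rabs (RInt g a b - Ig) < eps / 4) by (apply Gv; unfold a0 in *; lra).
      assert (G2 : Rabs (RInt g a0 b0 - Ig) < eps / 4) by (apply Gv; unfold a0 in *; lra).
      apply Rabs_def2 in G1. apply Rabs_def2 in G2. lra. }
    exists (fun ab => 0 < fst ab < a0 /\ b0 < snd ab). split.
    - apply Filter_prod with (fun a => 0 < a < a0) (fun b => b0 < b).
      + apply (at_right0_intro _ a0); auto.
      + exists b0; auto.
      + intros x y Hx Hy; simpl; auto.
    - intros [u1 u2] [v1 v2] [Hu1 Hu2] [Hv1 Hv2]. simpl in *.
      apply (norm_compat1 (V := C_R_CompleteNormedModule)). rewrite CR_norm, CRc_minus.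
      assert (K1 := key u1 u2 Hu1 Hu2). assert (K2 := key v1 v2 Hv1 Hv2).
      rewrite (Calg2 _ _ (Fn (a0, b0))).
      eapply Rle_lt_trans. apply Cmod_triangle. rewrite Cmod_opp. lra. }
  destruct Hcv as [y Hy].
  assert (Hint : @is_RInt_gen C_R_NormedModule f (at_right 0) (Rbar_locally p_infty) y).
  { intros P HP. unfold filtermapi.
    assert (H1 := Hy P HP). unfold filtermap in H1.
    assert (H2 : FF (fun ab : R * R => 0 < fst ab /\ 0 < snd ab)).
    { apply Filter_prod with (fun a => 0 < a) (fun b => 0 < b).
      apply (at_right0_intro _ 1); [lra| intros; lra]. exists 0; auto. intros; simpl; auto. }
    generalize (filter_and _ _ H1 H2). apply filter_imp.
    intros [a b] [HPab [Ha Hb]]. exists (Fn (a, b)). split; auto.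
    unfold Fn; simpl. apply (RInt_correct (V := C_R_CompleteNormedModule)). apply exf; auto. }
  exists y. split; auto.
  rewrite <- CR_norm.
  apply (RInt_gen_norm (V := C_R_CompleteNormedModule) (Fa := at_right 0) (Fb := Rbar_locally p_infty) f g y Ig).
  - apply Filter_prod with (fun a => 0 < a < 1) (fun b => 1 < b).
    apply (at_right0_intro _ 1); [lra| intros; lra]. exists 1; auto. intros; simpl; lra.
  - apply Filter_prod with (fun a => 0 < a < 1) (fun b => 1 < b).
    apply (at_right0_intro _ 1); [lra| intros; lra]. exists 1; auto.
    intros a b Ha Hb x Hx; simpl in Hx. rewrite CR_norm. apply Hfg; lra.
  - exact Hint.
  - exact Hgi.
Qed.

Lemma ln_le_sub1 (y : R) : 0 < y -> ln y <= y - 1.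
Proof. intros Hy. generalize (exp_ineq1_le (ln y)). rewrite exp_ln by auto. lra. Qed.

Lemma ln2_le1 : ln 2 <= 1.
Proof.
  rewrite <- ln_exp with 1. apply ln_le. lra.
  assert (H := exp_ineq1 1 ltac:(lra)). lra.
Qed.

Definition gmaj (D a b : R) (t : R) : R := D / ((t + a) * (t + b)).

Lemma gmaj_int (D a b : R) : 0 < a < b ->
  is_RInt_gen (gmaj D a b) (at_right 0) (Rbar_locally p_infty) (D * ln (b / a) / (b - a)).
Proof.
  intros Hab.
  set (Phi := fun t => D / (b - a) * (ln (t + a) - ln (t + b))).
  assert (HD : forall t, 0 <= t -> is_derive Phi t (gmaj D a b t)).
  { intros t Ht. unfold Phi, gmaj. auto_derive. lra. field. split; lra. }
  assert (HDe : forall t, 0 <= t -> Derive Phi t = gmaj D a b t).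
  { intros t Ht. apply is_derive_unique. auto. }
  apply is_RInt_gen_ext with (Derive Phi).
  { apply Filter_prod with (fun x => 0 < x) (fun y => 0 < y).
    apply (at_right0_intro _ 1); [lra|intros; lra]. exists 0; auto.
    intros x y Hx Hy z Hz. simpl in Hz. apply HDe.
    destruct (Rle_dec x y); [rewrite Rmin_left in Hz by lra|rewrite Rmin_right in Hz by lra]; lra. }
  replace (D * ln (b / a) / (b - a)) with (0 - Phi 0).
  2:{ unfold Phi. rewrite ln_div by lra. rewrite !Rplus_0_l. field. lra. }
  apply is_RInt_gen_Derive.
  - apply Filter_prod with (fun x => 0 < x) (fun y => 0 < y).
    apply (at_right0_intro _ 1); [lra|intros; lra]. exists 0; auto.
    intros x y Hx Hy z Hz. simpl in Hz. exists (gmaj D a b z). apply HD.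
    destruct (Rle_dec x y); [rewrite Rmin_left in Hz by lra|rewrite Rmin_right in Hz by lra]; lra.
  - apply Filter_prod with (fun x => 0 < x) (fun y => 0 < y).
    apply (at_right0_intro _ 1); [lra|intros; lra]. exists 0; auto.
    intros x y Hx Hy z Hz. simpl in Hz.
    assert (Hz0 : 0 < z).
    { destruct (Rle_dec x y); [rewrite Rmin_left in Hz by lra|rewrite Rmin_right in Hz by lra]; lra. }
    apply continuous_ext_loc with (gmaj D a b).
    { apply (locally_interval _ z 0 p_infty). simpl; lra. simpl; auto.
      intros w Hw _. symmetry; apply HDe; simpl in Hw; lra. }
    unfold gmaj. apply (ex_derive_continuous (K := R_AbsRing) (V := R_NormedModule)). auto_derive.
    apply Rmult_integral_contrapositive; split; lra.
  - apply (filterlim_filter_le_1 (F := locally 0)).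
    apply filter_le_within.
    apply (ex_derive_continuous (K := R_AbsRing) (V := R_NormedModule)). exists (gmaj D a b 0). apply HD. lra.
  - apply filterlim_locally. intros eps.
    exists (Rabs D / eps). intros t Ht.
    unfold ball; simpl. unfold AbsRing_ball, abs, minus, plus, opp; simpl.
    assert (Ht0 : 0 < t).
    { apply Rle_lt_trans with (Rabs D / eps); auto. apply Rdiv_le_0_compat. apply Rabs_pos. apply cond_pos. }
    assert (L1 : 0 <= ln (t + b) - ln (t + a)).
    { generalize (ln_le (t + a) (t + b) ltac:(lra) ltac:(lra)). lra. }
    assert (L2 : ln (t + b) - ln (t + a) <= (b - a) / (t + a)).
    { rewrite <- ln_div by lra. eapply Rle_trans. apply ln_le_sub1. apply Rdiv_lt_0_compat; lra.
      right. field. lra. }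
    unfold Phi. rewrite Ropp_0, Rplus_0_r.
    rewrite Rabs_mult. unfold Rdiv at 1. rewrite Rabs_mult.
    rewrite Rabs_inv, (Rabs_right (b - a)) by lra.
    rewrite (Rabs_left1 (ln (t + a) - ln (t + b))); [|lra].
    apply Rle_lt_trans with (Rabs D / (t + a)).
    { replace (Rabs D / (t + a)) with (Rabs D * / (b - a) * ((b - a) / (t + a))) by (field; lra).
      apply Rmult_le_compat_l. apply Rmult_le_pos. apply Rabs_pos. apply Rlt_le, Rinv_0_lt_compat; lra. lra. }
    destruct (Req_dec (Rabs D) 0) as [E|E].
    { rewrite E. unfold Rdiv; rewrite Rmult_0_l. apply cond_pos. }
    assert (HDp : 0 < Rabs D) by (generalize (Rabs_pos D); lra).
    apply Rlt_div_l. lra. 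
    assert (Rabs D / eps < t + a) by lra.
    apply Rlt_div_l in H. 2: apply cond_pos. rewrite Rmult_comm. exact H.
Qed.


Lemma abs_sin_le (b : R) : Rabs (sin b) <= Rabs b.
Proof.
  assert (HPI := PI2_1).
  assert (K : forall x, 0 <= x -> Rabs (sin x) <= x).
  { intros x Hx. destruct (Rle_lt_dec 1 x).
    - generalize (SIN_bound x); intros. apply Rabs_le; lra.
    - destruct (Req_dec x 0) as [->|Hne]. rewrite sin_0, Rabs_R0; lra.
      assert (0 < sin x) by (apply sin_gt_0; lra).
      assert (sin x < x) by (apply sin_lt_x; lra).
      rewrite Rabs_right; lra. }
  destruct (Rle_dec 0 b).
  - rewrite (Rabs_right b) by lra. auto.
  - replace b with (- (- b)) by ring. rewrite sin_neg, Rabs_Ropp, Rabs_Ropp.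
    rewrite (Rabs_right (-b)) by lra. apply K; lra.
Qed.

Lemma cos_sub1 (c : R) : Rabs (cos c - 1) <= c ^ 2 / 2.
Proof.
  replace c with (2 * (c / 2)) at 1 by field. rewrite cos_2a_sin.
  assert (H := abs_sin_le (c / 2)).
  assert (H2 : sin (c/2) * sin (c/2) <= (c/2) * (c/2)).
  {
    replace (sin (c / 2) * sin (c / 2)) with (Rabs (sin (c / 2)) * Rabs (sin (c / 2))).
    2:{ rewrite <- Rabs_mult. apply Rabs_right. apply Rle_ge, Rle_0_sqr. }
    replace (c / 2 * (c / 2)) with (Rabs (c/2) * Rabs (c/2)).
    2:{ rewrite <- Rabs_mult. apply Rabs_right. apply Rle_ge, Rle_0_sqr. }
    apply Rmult_le_compat; auto; apply Rabs_pos. }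
  rewrite Rabs_left1. 2: { generalize (Rle_0_sqr (sin (c/2))). unfold Rsqr. lra. }
  generalize (Rle_0_sqr (sin (c/2))). unfold Rsqr. nra.
Qed.

Lemma sin_sub (b : R) : Rabs (sin b - b) <= 2 * b ^ 2.
Proof.
  destruct (Rle_lt_dec 1 (Rabs b)).
  - generalize (SIN_bound b); intros.
    eapply Rle_trans. apply Rabs_triang. rewrite Rabs_Ropp.
    assert (Rabs (sin b) <= 1) by (apply Rabs_le; lra).
    assert (Rabs b <= b ^ 2). { rewrite <- (Rabs_right (b^2)) by (apply Rle_ge, pow2_ge_0). 
      replace (b^2) with (b * b) by ring. rewrite Rabs_mult. nra. }
    nra.
  - destruct (MVT_gen (fun t => sin t - t) 0 b (fun t => cos t - 1)) as [c [Hc E]].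
    + intros x _. auto_derive. auto. ring.
    + intros x _. apply continuity_pt_minus. apply continuity_sin. apply continuity_pt_id.
    + rewrite sin_0 in E. replace (sin b - b) with (sin b - b - (0 - 0)) by ring. rewrite E.
      rewrite Rminus_0_r, Rabs_mult.
      assert (Hc' : Rabs c <= Rabs b).
      { destruct (Rle_dec 0 b). rewrite Rmin_left, Rmax_right in Hc by lra. rewrite !Rabs_right; lra.
        rewrite Rmin_right, Rmax_left in Hc by lra. rewrite !Rabs_left1; lra. }
      assert (H1 := cos_sub1 c).
      assert (c ^ 2 <= b ^ 2).
      { replace (c^2) with (Rabs c * Rabs c). replace (b^2) with (Rabs b * Rabs b).
        apply Rmult_le_compat; auto; apply Rabs_pos.
        rewrite <- Rabs_mult, Rabs_right. ring. apply Rle_ge. nra.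
        rewrite <- Rabs_mult, Rabs_right. ring. apply Rle_ge. nra. }
      assert (0 <= Rabs b) by apply Rabs_pos.
      assert (b ^ 2 = Rabs b * Rabs b). { rewrite <- Rabs_mult, Rabs_right. ring. apply Rle_ge. nra. }
      assert (Rabs (cos c - 1) <= b ^ 2 / 2) by lra.
      assert (0 <= Rabs (cos c - 1)) by apply Rabs_pos.
      nra.
Qed.

Lemma exp_sub1 (s : R) : Rabs (exp s - 1) <= Rabs s * exp (Rabs s).
Proof.
  destruct (Rle_dec 0 s).
  - rewrite (Rabs_right s) by lra.
    assert (H1 := exp_ineq1_le s). assert (H2 := exp_ineq1_le (- s)).
    assert (E : exp s * exp (- s) = 1) by (rewrite <- exp_plus; replace (s + - s) with 0 by ring; apply exp_0).
    assert (0 < exp s) by apply exp_pos.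
    rewrite Rabs_right by lra. nra.
  - rewrite (Rabs_left s) by lra.
    assert (H1 := exp_ineq1_le s). assert (exp s < 1) by (rewrite <- exp_0; apply exp_increasing; lra).
    assert (1 <= exp (- s)) by (rewrite <- exp_0; apply exp_le_3 || (apply Rlt_le, exp_increasing; lra)).
    rewrite Rabs_left by lra. nra.
Qed.

Lemma exp_sub2 (s : R) : Rabs (exp s - 1 - s) <= s ^ 2 * exp (Rabs s).
Proof.
  assert (H1 := exp_ineq1_le s).
  rewrite Rabs_right by lra.
  destruct (Rle_dec 0 s).
  - rewrite (Rabs_right s) by lra.
    assert (H2 := exp_ineq1_le (- s)).
    assert (E : exp s * exp (- s) = 1) by (rewrite <- exp_plus; replace (s + - s) with 0 by ring; apply exp_0).
    assert (0 < exp s) by apply exp_pos.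
    assert (exp s - 1 <= s * exp s) by nra.
    nra.
  - rewrite (Rabs_left s) by lra.
    assert (H2 := exp_ineq1_le (- s)).
    assert (E : exp s * exp (- s) = 1) by (rewrite <- exp_plus; replace (s + - s) with 0 by ring; apply exp_0).
    assert (0 < exp s) by apply exp_pos.
    assert (1 <= exp (- s)) by lra.
    assert (exp s * (1 - s) <= 1) by nra.
    assert (exp s - 1 - s <= s ^ 2) by nra.
    nra.
Qed.

Lemma Cmod_le_sum (z : C) : Cmod z <= Rabs (fst z) + Rabs (snd z).
Proof.
  unfold Cmod. rewrite <- (sqrt_pow2 (Rabs (fst z) + Rabs (snd z))).
  2:{ generalize (Rabs_pos (fst z)) (Rabs_pos (snd z)); lra. }
  apply sqrt_le_1_alt.
  assert (fst z ^ 2 = Rabs (fst z) ^ 2) by (rewrite RPow_abs; rewrite Rabs_right; [ring| apply Rle_ge, pow2_ge_0]).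
  assert (snd z ^ 2 = Rabs (snd z) ^ 2) by (rewrite RPow_abs; rewrite Rabs_right; [ring| apply Rle_ge, pow2_ge_0]).
  generalize (Rabs_pos (fst z)) (Rabs_pos (snd z)); nra.
Qed.

Lemma Cmod_sq (z : C) : Cmod z ^ 2 = fst z ^ 2 + snd z ^ 2.
Proof. unfold Cmod. rewrite pow2_sqrt. auto. nra. Qed.

Lemma abs_fst_le (z : C) : Rabs (fst z) <= Cmod z.
Proof. generalize (Rmax_Cmod z). generalize (Rmax_l (Rabs (fst z)) (Rabs (snd z))). lra. Qed.
Lemma abs_snd_le (z : C) : Rabs (snd z) <= Cmod z.
Proof. generalize (Rmax_Cmod z). generalize (Rmax_r (Rabs (fst z)) (Rabs (snd z))). lra. Qed.

Lemma cexp_add (a b : C) : cexp (Cplus a b) = Cmult (cexp a) (cexp b).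
Proof.
  destruct a as [a1 a2], b as [b1 b2]. unfold cexp, Cplus, Cmult; simpl.
  rewrite exp_plus, cos_plus, sin_plus. f_equal; ring.
Qed.

Lemma Cmod_cexp (u : C) : Cmod (cexp u) = exp (fst u).
Proof.
  destruct u as [s b]. unfold cexp, Cmod, Re, Im; cbn [fst snd].
  replace ((exp s * cos b) ^ 2 + (exp s * sin b) ^ 2) with (exp s ^ 2 * (sin b ^ 2 + cos b ^ 2)) by ring.
  assert (E1 : sin b ^ 2 + cos b ^ 2 = 1) by (generalize (sin2_cos2 b); unfold Rsqr; intros; nra). rewrite E1, Rmult_1_r. rewrite <- Rsqr_pow2, sqrt_Rsqr. auto. apply Rlt_le, exp_pos.
Qed.

Lemma cexp_taylor (u : C) :
  Cmod (Cminus (Cminus (cexp u) (RtoC 1)) u) <= 4 * Cmod u ^ 2 * exp (Cmod u).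
Proof.
  destruct u as [s b].
  assert (Hs := abs_fst_le (s, b)). assert (Hb := abs_snd_le (s, b)). simpl in Hs, Hb.
  rewrite Cmod_sq. simpl.
  eapply Rle_trans. apply Cmod_le_sum. unfold cexp, Cminus, Cplus, Copp, RtoC; simpl.
  assert (Es : exp s <= exp (Rabs s)) by (apply exp_le_3 || (destruct (Rle_dec 0 s); [rewrite Rabs_right by lra; lra| rewrite Rabs_left by lra; left; apply exp_increasing; lra])).
  assert (Es2 : exp (Rabs s) <= exp (Cmod (s, b))) by (destruct Hs; [left; apply exp_increasing; auto| right; congruence]).
  assert (Ep : 0 < exp s) by apply exp_pos.
  assert (C1 := cos_sub1 b). assert (S1 := sin_sub b). assert (X1 := exp_sub1 s). assert (X2 := exp_sub2 s).
  replace (exp s * cos b + - (1) + - s) with (exp s * (cos b - 1) + (exp s - 1 - s)) by ring.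
  replace (exp s * sin b + - (0) + - b) with (exp s * (sin b - b) + b * (exp s - 1)) by ring.
  set (E := exp (Rabs s)) in *. set (E2 := exp (Cmod (s, b))) in *.
  assert (R1 : Rabs (exp s * (cos b - 1) + (exp s - 1 - s)) <= E * (b ^ 2 / 2) + s ^ 2 * E).
  { eapply Rle_trans. apply Rabs_triang. rewrite Rabs_mult, (Rabs_right (exp s)) by lra.
    apply Rplus_le_compat; auto. apply Rmult_le_compat; auto; try lra. apply Rabs_pos. }
  assert (R2 : Rabs (exp s * (sin b - b) + b * (exp s - 1)) <= E * (2 * b ^ 2) + Rabs b * (Rabs s * E)).
  { eapply Rle_trans. apply Rabs_triang. rewrite !Rabs_mult, (Rabs_right (exp s)) by lra.
    apply Rplus_le_compat. apply Rmult_le_compat; auto; try lra. apply Rabs_pos.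
    apply Rmult_le_compat_l; auto. apply Rabs_pos. }
  assert (HE : 0 < E) by apply exp_pos.
  assert (Rabs b * Rabs s <= (b ^ 2 + s ^ 2) / 2).
  { replace (b ^ 2) with (Rabs b ^ 2) by (rewrite RPow_abs, Rabs_right; [ring| apply Rle_ge, pow2_ge_0]).
    replace (s ^ 2) with (Rabs s ^ 2) by (rewrite RPow_abs, Rabs_right; [ring| apply Rle_ge, pow2_ge_0]).
    generalize (pow2_ge_0 (Rabs b - Rabs s)); intros; nra. }
  assert (0 <= b ^ 2 + s ^ 2) by nra.
  assert (Rabs b * (Rabs s * E) <= (b ^ 2 + s ^ 2) / 2 * E) by (rewrite <- Rmult_assoc; apply Rmult_le_compat_r; lra).
  assert ((b ^ 2 + s ^ 2) * E <= (s ^ 2 + b ^ 2) * E2) by (replace (b^2+s^2) with (s^2+b^2) by ring; apply Rmult_le_compat_l; lra).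
  nra.
Qed.


Lemma cont_C {U : UniformSpace} (f : U -> C) x :
  continuous (fun t => fst (f t)) x -> continuous (fun t => snd (f t)) x -> continuous f x.
Proof.
  intros H1 H2. apply filterlim_locally. intros eps.
  apply filterlim_locally with (eps := eps) in H1.
  apply filterlim_locally with (eps := eps) in H2.
  generalize (filter_and _ _ H1 H2). apply filter_imp. intros t [A B].
  split; auto.
Qed.

Lemma cont_fst {U : UniformSpace} (f : U -> C) x :
  continuous f x -> continuous (fun t => fst (f t)) x.
Proof.
  intros H. apply filterlim_locally. intros eps.
  apply filterlim_locally with (eps := eps) in H.
  revert H. apply filter_imp. intros t [A B]; auto.
Qed.

Lemma cont_snd {U : UniformSpace} (f : U -> C) x :
  continuous f x -> continuous (fun t => snd (f t)) x.
Proof.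
  intros H. apply filterlim_locally. intros eps.
  apply filterlim_locally with (eps := eps) in H.
  revert H. apply filter_imp. intros t [A B]; auto.
Qed.

Lemma cont_Rmult {U : UniformSpace} (f g : U -> R) x :
  continuous f x -> continuous g x -> continuous (fun t => f t * g t) x.
Proof. intros; apply (continuous_mult (K := R_AbsRing)); auto. Qed.
Lemma cont_Rplus {U : UniformSpace} (f g : U -> R) x :
  continuous f x -> continuous g x -> continuous (fun t => f t + g t) x.
Proof. intros; apply (continuous_plus (V := R_NormedModule)); auto. Qed.
Lemma cont_Ropp {U : UniformSpace} (f : U -> R) x :
  continuous f x -> continuous (fun t => - f t) x.
Proof. intros; apply (continuous_opp (V := R_NormedModule)); auto. Qed.
Lemma cont_Rminus {U : UniformSpace} (f g : U -> R) x :
  continuous f x -> continuous g x -> continuous (fun t => f t - g t) x.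
Proof. intros; apply cont_Rplus; auto; apply cont_Ropp; auto. Qed.

Lemma cont_Cmult {U : UniformSpace} (f g : U -> C) x :
  continuous f x -> continuous g x -> continuous (fun t => Cmult (f t) (g t)) x.
Proof.
  intros Hf Hg. apply cont_C; simpl.
  - apply cont_Rminus; apply cont_Rmult; (apply cont_fst || apply cont_snd); auto.
  - apply cont_Rplus; apply cont_Rmult; (apply cont_fst || apply cont_snd); auto.
Qed.

Lemma cont_Cminus {U : UniformSpace} (f g : U -> C) x :
  continuous f x -> continuous g x -> continuous (fun t => Cminus (f t) (g t)) x.
Proof.
  intros Hf Hg. apply cont_C; simpl.
  - apply cont_Rplus. apply cont_fst; auto. apply cont_Ropp. apply cont_fst; auto.
  - apply cont_Rplus. apply cont_snd; auto. apply cont_Ropp. apply cont_snd; auto.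
Qed.

Lemma cont_RtoC {U : UniformSpace} (f : U -> R) x :
  continuous f x -> continuous (fun t => RtoC (f t)) x.
Proof.
  intros Hf. apply cont_C; simpl; auto. apply continuous_const.
Qed.

Lemma cont_Cconst {U : UniformSpace} (c : C) x : continuous (fun _ : U => c) x.
Proof. apply continuous_const. Qed.

Lemma cont_Cid (x : C) : continuous (fun v : C => v) x.
Proof. apply continuous_id. Qed.

Lemma cont_Rid (x : R) : continuous (fun t : R => t) x.
Proof. apply continuous_id. Qed.

Lemma cont_exp (f : R -> R) x : continuous f x -> continuous (fun t => exp (f t)) x.
Proof.
  intros Hf. apply continuous_comp with (g := exp); auto.
  apply (ex_derive_continuous (K := R_AbsRing) (V := R_NormedModule)). auto_derive. auto.
Qed.
Lemma cont_cos (f : R -> R) x : continuous f x -> continuous (fun t => cos (f t)) x.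
Proof.
  intros Hf. apply continuous_comp with (g := cos); auto.
  apply (ex_derive_continuous (K := R_AbsRing) (V := R_NormedModule)). auto_derive. auto.
Qed.
Lemma cont_sin (f : R -> R) x : continuous f x -> continuous (fun t => sin (f t)) x.
Proof.
  intros Hf. apply continuous_comp with (g := sin); auto.
  apply (ex_derive_continuous (K := R_AbsRing) (V := R_NormedModule)). auto_derive. auto.
Qed.

Lemma cont_cexp {U : UniformSpace} (f : U -> C) x : continuous f x -> continuous (fun t => cexp (f t)) x.
Proof.
  intros Hf. apply continuous_comp with (g := cexp); auto.
  apply cont_C; unfold cexp, Re, Im; simpl.
  - apply cont_Rmult. apply continuous_comp with (g := exp). apply cont_fst, cont_Cid.
    apply (ex_derive_continuous (K := R_AbsRing) (V := R_NormedModule)). auto_derive. auto.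
    apply continuous_comp with (g := cos). apply cont_snd, cont_Cid.
    apply (ex_derive_continuous (K := R_AbsRing) (V := R_NormedModule)). auto_derive. auto.
  - apply cont_Rmult. apply continuous_comp with (g := exp). apply cont_fst, cont_Cid.
    apply (ex_derive_continuous (K := R_AbsRing) (V := R_NormedModule)). auto_derive. auto.
    apply continuous_comp with (g := sin). apply cont_snd, cont_Cid.
    apply (ex_derive_continuous (K := R_AbsRing) (V := R_NormedModule)). auto_derive. auto.
Qed.


Fixpoint cpow (z : C) (n : nat) : C :=
  match n with O => RtoC 1 | S k => Cmult z (cpow z k) end.

Definition Iint (phi : R -> C) (n : nat) (z : C) (t : R) : C :=
  Cmult (cpow (Cmult Ci (RtoC t)) n) (lap_integrand phi z t).

Definition Gl (phi : R -> C) (n : nat) (z : C) : C :=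
  @RInt_gen C_R_CompleteNormedModule (Iint phi n z) (at_right 0) (Rbar_locally p_infty).

Lemma Cmod_cpow z n : Cmod (cpow z n) = Cmod z ^ n.
Proof. induction n; simpl. apply Cmod_1. rewrite Cmod_mult, IHn. ring. Qed.

Lemma it_eq (t : R) : Cmult Ci (RtoC t) = (0, t).
Proof. unfold Cmult, Ci, RtoC; simpl. f_equal; ring. Qed.

Lemma Cmod_it t : Cmod (Cmult Ci (RtoC t)) = Rabs t.
Proof. rewrite it_eq. unfold Cmod; cbn [fst snd]. replace (0 ^ 2 + t ^ 2) with (Rsqr t) by (unfold Rsqr; ring). apply sqrt_Rsqr_abs. Qed.

Lemma Cmod_lapexp t z : Cmod (cexp (Cmult (Cmult Ci (RtoC t)) z)) = exp (- t * Im z).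
Proof. rewrite Cmod_cexp. f_equal. rewrite it_eq. destruct z; unfold Im; simpl. ring. Qed.

Lemma Cmod_Iint phi n z t : 0 < t ->
  Cmod (Iint phi n z t) = t ^ n * Cmod (phi t) * exp (- t * Im z).
Proof.
  intros Ht. unfold Iint, lap_integrand. rewrite !Cmod_mult, Cmod_cpow, Cmod_it, Cmod_lapexp.
  rewrite Rabs_right by lra. ring.
Qed.

Lemma cont_it (x : R) : continuous (fun t : R => Cmult Ci (RtoC t)) x.
Proof. apply cont_Cmult. apply cont_Cconst. apply cont_RtoC, cont_Rid. Qed.

Lemma cont_cpow_it n (x : R) : continuous (fun t : R => cpow (Cmult Ci (RtoC t)) n) x.
Proof. induction n; simpl. apply cont_Cconst. apply cont_Cmult; auto. apply cont_it. Qed.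

Lemma cont_lapexp z (x : R) : continuous (fun t : R => cexp (Cmult (Cmult Ci (RtoC t)) z)) x.
Proof. apply cont_cexp. apply cont_Cmult. apply cont_it. apply cont_Cconst. Qed.

Lemma cont_Iint phi n z x : continuous phi x -> continuous (Iint phi n z) x.
Proof.
  intros Hp. unfold Iint, lap_integrand. apply cont_Cmult. apply cont_cpow_it.
  apply cont_Cmult; auto. apply cont_lapexp.
Qed.

Lemma mq_pos M n : weight_seq M -> 0 < mq M n.
Proof. intros [Hp _]. unfold mq. apply Rdiv_lt_0_compat; auto. Qed.

Lemma mq_mono M n : weight_seq M -> mq M n <= mq M (S n).
Proof.
  intros W. destruct W as [Hp [_ [Hlc _]]].
  assert (H := Hlc (S n) ltac:(lia)). simpl in H. rewrite Nat.sub_0_r in H.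
  unfold mq.
  assert (a := Hp n). assert (b := Hp (S n)). assert (c := Hp (S (S n))).
  replace (M (S n) / M n) with (M (S n) * M (S n) * / (M n * M (S n))) by (field; lra).
  replace (M (S (S n)) / M (S n)) with (M n * M (S (S n)) * / (M n * M (S n))) by (field; lra).
  apply Rmult_le_compat_r. apply Rlt_le, Rinv_0_lt_compat, Rmult_lt_0_compat; auto.
  simpl in H. lra.
Qed.

Lemma B_nonneg M h phi B : weight_seq M -> CMh_bound M h phi B -> 0 <= B.
Proof.
  intros [_ [HM0 _]] [_ Hb]. assert (H := Hb O 1 ltac:(lra)). simpl in H.
  rewrite HM0 in H. generalize (Cmod_ge_0 (phi 1)). lra.
Qed.

Definition al (h : R) M n := h * mq M n.
Definition be (h : R) M n := 2 * h * mq M (S n).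
Definition Dn (B h : R) M n := 6 * B * h ^ (S n) * M (S n) * (h * mq M (S n)).
Definition Ign (B h : R) M n := Dn B h M n * ln (be h M n / al h M n) / (be h M n - al h M n).

Lemma maj_abs (P t a b c0 c1 c2 : R) : 0 <= P -> 0 < t -> 0 < a -> 2 * a <= b ->
  P <= c0 -> t * P <= c1 -> t ^ 2 * P <= c2 -> c0 * a = c1 -> c1 * b = 2 * c2 ->
  P * ((t + a) * (t + b)) <= 3 * c1 * b.
Proof.
  intros HP Ht Ha Hab H0 H1 H2 E1 E2.
  destruct (Rle_dec t a).
  - assert (A1 : (t + a) * (t + b) <= 3 * a * b) by nra.
    assert (P * ((t + a) * (t + b)) <= P * (3 * a * b)) by (apply Rmult_le_compat_l; auto).
    assert (P * a <= c0 * a) by (apply Rmult_le_compat_r; lra).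
    nra.
  - destruct (Rle_dec (2 * t) b).
    + assert (A1 : (t + a) * (t + b) <= 3 * t * b) by nra.
      assert (P * ((t + a) * (t + b)) <= P * (3 * t * b)) by (apply Rmult_le_compat_l; auto).
      nra.
    + assert (A1 : (t + a) * (t + b) <= 6 * t ^ 2) by nra.
      assert (P * ((t + a) * (t + b)) <= P * (6 * t ^ 2)) by (apply Rmult_le_compat_l; auto).
      nra.
Qed.

Lemma maj_phi M h phi B n t : weight_seq M -> 0 < h -> CMh_bound M h phi B -> 0 < t ->
  t ^ n * Cmod (phi t) <= gmaj (Dn B h M n) (al h M n) (be h M n) t.
Proof.
  intros W Hh Hb Ht.
  assert (HB := B_nonneg _ _ _ _ W Hb).
  destruct Hb as [_ Hb].
  assert (Mp := proj1 W).
  assert (m1 := mq_pos M n W). assert (m2 := mq_pos M (S n) W). assert (m12 := mq_mono M n W).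
  assert (B0 := Hb n t Ht). assert (B1 := Hb (S n) t Ht). assert (B2 := Hb (S (S n)) t Ht).
  unfold gmaj, al, be, Dn.
  assert (Hden : 0 < (t + h * mq M n) * (t + 2 * h * mq M (S n))).
  { apply Rmult_lt_0_compat; nra. }
  apply (Rle_div_r (t ^ n * Cmod (phi t)) _ _ Hden).
  assert (E : 6 * B * h ^ S n * M (S n) * (h * mq M (S n)) = 3 * (B * h ^ S n * M (S n)) * (2 * h * mq M (S n))) by ring.
  rewrite E.
  apply (maj_abs _ t _ _ (B * h ^ n * M n) _ (B * h ^ S (S n) * M (S (S n)))).
  - apply Rmult_le_pos. apply pow_le; lra. apply Cmod_ge_0.
  - auto.
  - nra.
  - nra.
  - exact B0.
  - simpl in B1. simpl. lra.
  - simpl in B2. simpl. lra.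
  - unfold mq. simpl. field. generalize (Mp n); lra.
  - unfold mq. simpl. field. generalize (Mp (S n)); lra.
Qed.

Lemma gmaj_cont D a b x : 0 < a -> 0 < b -> 0 < x -> continuous (gmaj D a b) x.
Proof.
  intros Ha Hb Hx. unfold gmaj.
  apply (ex_derive_continuous (K := R_AbsRing) (V := R_NormedModule)). auto_derive.
  apply Rmult_integral_contrapositive; split; lra.
Qed.

Lemma exp_neg_le1 t y : 0 < t -> 0 <= y -> exp (- t * y) <= 1.
Proof.
  intros Ht Hy. rewrite <- exp_0. destruct (Req_dec y 0) as [->|Hne].
  right. f_equal. ring. left. apply exp_increasing. nra.
Qed.

Lemma Gl_ex M h phi B n z : weight_seq M -> 0 < h -> CMh_bound M h phi B -> 0 <= Im z ->
  @is_RInt_gen C_R_NormedModule (Iint phi n z) (at_right 0) (Rbar_locally p_infty) (Gl phi n z)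
  /\ Cmod (Gl phi n z) <= Ign B h M n.
Proof.
  intros W Hh Hb Hz.
  assert (m1 := mq_pos M n W). assert (m2 := mq_pos M (S n) W). assert (m12 := mq_mono M n W).
  destruct (ig_ex (Iint phi n z) (gmaj (Dn B h M n) (al h M n) (be h M n)) (Ign B h M n)) as [l [Hl Hlb]].
  - intros x Hx. apply cont_Iint. apply (proj1 Hb); auto.
  - intros x Hx. apply gmaj_cont; auto; unfold al, be; nra.
  - intros x Hx. rewrite Cmod_Iint by auto.
    eapply Rle_trans. 2: apply (maj_phi M h phi B n x W Hh Hb Hx).
    rewrite <- (Rmult_1_r (x ^ n * Cmod (phi x))) at 2.
    apply Rmult_le_compat_l. apply Rmult_le_pos. apply pow_le; lra. apply Cmod_ge_0.
    apply exp_neg_le1; auto.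
  - unfold Ign. apply gmaj_int. unfold al, be; nra.
  - assert (E : Gl phi n z = l).
    { unfold Gl. apply (is_RInt_gen_unique (V := C_R_CompleteNormedModule)). exact Hl. }
    rewrite E. split; auto.
Qed.

Lemma Ign_bound M C0 H h phi B n : weight_seq M -> 0 < C0 -> 1 < H -> cond_sm M C0 H ->
  0 < h -> CMh_bound M h phi B ->
  Ign B h M n <= 6 * h * (1 + C0 * H) * B * (H * h) ^ n * M (S n).
Proof.
  intros W HC0 HH Hsm Hh Hb.
  assert (HB := B_nonneg _ _ _ _ W Hb).
  assert (m1 := mq_pos M n W). assert (m2 := mq_pos M (S n) W). assert (m12 := mq_mono M n W).
  assert (MS := proj1 W (S n)).
  unfold Ign, Dn, al, be.
  set (c1 := B * h ^ S n * M (S n)).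
  assert (Hc1 : 0 <= c1) by (unfold c1; apply Rmult_le_pos; [apply Rmult_le_pos; [auto| apply pow_le; lra]| lra]).
  assert (Eb : 2 * h * mq M (S n) / (h * mq M n) = 2 * (mq M (S n) / mq M n)) by (field; lra).
  rewrite Eb.
  assert (Hr : 1 <= mq M (S n) / mq M n) by (apply Rle_div_r; lra).
  rewrite ln_mult by lra.
  assert (L1 := Hsm n). assert (L2 := ln2_le1).
  assert (L3 : 0 <= ln (mq M (S n) / mq M n)) by (rewrite <- ln_1; apply ln_le; lra).
  assert (L4 : 0 <= ln 2) by (rewrite <- ln_1; apply ln_le; lra).
  set (Lg := ln 2 + ln (mq M (S n) / mq M n)).
  assert (HLg : 0 <= Lg <= 1 + C0 * H ^ S n) by (unfold Lg; lra).
  set (b := 2 * h * mq M (S n)). set (a := h * mq M n).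
  assert (Ha : 0 < a) by (unfold a; nra). assert (Hab : 2 * a <= b) by (unfold a, b; nra).
  replace (6 * B * h ^ S n * M (S n) * (h * mq M (S n))) with (3 * c1 * b) by (unfold c1, b; ring).
  assert (Step : 3 * c1 * b * Lg / (b - a) <= 6 * c1 * Lg).
  { apply Rle_div_l. lra. assert (0 <= c1 * Lg) by (apply Rmult_le_pos; lra). nra. }
  eapply Rle_trans. apply Step.
  assert (HHn : 1 <= H ^ n) by (apply pow_R1_Rle; lra).
  rewrite Rpow_mult_distr. unfold c1. simpl.
  assert (0 <= B * h ^ n * M (S n)) by (apply Rmult_le_pos; [apply Rmult_le_pos; [auto| apply pow_le; lra]| lra]).
  assert (Lg <= (1 + C0 * H) * H ^ n) by (simpl in HLg; nra).
  replace (6 * (B * (h * h ^ n) * M (S n)) * Lg) with (6 * h * (B * h ^ n * M (S n)) * Lg) by ring.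
  replace (6 * h * (1 + C0 * H) * B * (H ^ n * h ^ n) * M (S n)) with (6 * h * (B * h ^ n * M (S n)) * ((1 + C0 * H) * H ^ n)) by ring.
  apply Rmult_le_compat_l; auto. apply Rmult_le_pos; [lra| auto].
Qed.

Lemma is_RInt_Cmult (c : C) (f : R -> C) a b (l : C) :
  @is_RInt C_R_NormedModule f a b l ->
  @is_RInt C_R_NormedModule (fun t => Cmult c (f t)) a b (Cmult c l).
Proof.
  intros H.
  assert (H1 := is_RInt_fct_extend_fst (U := R_NormedModule) (V := R_NormedModule) f a b l H).
  assert (H2 := is_RInt_fct_extend_snd (U := R_NormedModule) (V := R_NormedModule) f a b l H).
  destruct c as [c1 c2].
  apply is_RInt_ext with (fun t => (fst (Cmult (c1, c2) (f t)), snd (Cmult (c1, c2) (f t)))).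
  { intros x _. destruct (Cmult (c1, c2) (f x)); reflexivity. }
  replace (Cmult (c1, c2) l) with (fst (Cmult (c1, c2) l), snd (Cmult (c1, c2) l)) by (destruct (Cmult (c1, c2) l); reflexivity).
  apply (is_RInt_fct_extend_pair (U := R_NormedModule) (V := R_NormedModule)); simpl.
  - apply is_RInt_ext with (fun t => minus (scal c1 (fst (f t))) (scal c2 (snd (f t)))).
    { intros; reflexivity. }
    apply (is_RInt_minus (V := R_NormedModule)); apply (is_RInt_scal (V := R_NormedModule)); auto.
  - apply is_RInt_ext with (fun t => plus (scal c1 (snd (f t))) (scal c2 (fst (f t)))).
    { intros; reflexivity. }
    apply (is_RInt_plus (V := R_NormedModule)); apply (is_RInt_scal (V := R_NormedModule)); auto.
Qed.

Lemma is_RInt_gen_Cmult (c : C) (f : R -> C) (l : C) :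
  @is_RInt_gen C_R_NormedModule f (at_right 0) (Rbar_locally p_infty) l ->
  @is_RInt_gen C_R_NormedModule (fun t => Cmult c (f t)) (at_right 0) (Rbar_locally p_infty) (Cmult c l).
Proof.
  intros H P HP.
  assert (Hc : continuous (fun v : C => Cmult c v) l) by (apply cont_Cmult; [apply cont_Cconst| apply cont_Cid]).
  assert (HP' := Hc P HP).
  assert (Hf := H _ HP'). unfold filtermapi in *.
  revert Hf. apply filter_imp. intros ab [y [Hy1 Hy2]].
  exists (Cmult c y). split; auto. apply is_RInt_Cmult; auto.
Qed.

Lemma is_RInt_gen_Cminus (f g : R -> C) (lf lg : C) :
  @is_RInt_gen C_R_NormedModule f (at_right 0) (Rbar_locally p_infty) lf ->
  @is_RInt_gen C_R_NormedModule g (at_right 0) (Rbar_locally p_infty) lg ->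
  @is_RInt_gen C_R_NormedModule (fun t => Cminus (f t) (g t)) (at_right 0) (Rbar_locally p_infty) (Cminus lf lg).
Proof.
  intros Hf Hg. rewrite <- CR_minus.
  apply (is_RInt_gen_ext (fun t => @minus C_R_NormedModule (f t) (g t))).
  { apply Filter_prod with (fun _ => True) (fun _ => True). apply filter_true. apply filter_true.
    intros; apply CR_minus. }
  apply is_RInt_gen_minus; auto.
Qed.

Lemma locally_C_intro (z : C) (P : C -> Prop) e : 0 < e ->
  (forall w, Cmod (Cminus w z) < e -> P w) -> locally z P.
Proof.
  intros He H. exists (mkposreal (e / 2) ltac:(lra)). intros w [H1 H2]. apply H.
  eapply Rle_lt_trans. apply Cmod_le_sum. destruct w as [w1 w2], z as [z1 z2]; simpl in *.
  change (Rabs (w1 + - z1) < e / 2) in H1. change (Rabs (w2 + - z2) < e / 2) in H2. lra.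
Qed.

Lemma Fc_eq (P ph E E2 d it : C) :
  Cminus (Cminus (Cmult P (Cmult ph (Cmult E E2))) (Cmult P (Cmult ph E)))
    (Cmult d (Cmult (Cmult it P) (Cmult ph E)))
  = Cmult (Cmult P (Cmult ph E)) (Cminus (Cminus E2 (RtoC 1)) (Cmult it d)).
Proof. ring. Qed.

Lemma Gl_key M h phi B n z w : weight_seq M -> 0 < h -> CMh_bound M h phi B -> 0 < Im z ->
  Cmod (Cminus w z) < Im z ->
  Cmod (Cminus (Cminus (Gl phi n w) (Gl phi n z)) (Cmult (Cminus w z) (Gl phi (S n) z)))
  <= 4 * Cmod (Cminus w z) ^ 2 * Ign B h M (S (S n)).
Proof.
  intros W Hh Hb Hz Hwz.
  set (d := Cminus w z) in *.
  assert (Hw : 0 <= Im w).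
  { assert (E : Im w = Im z + snd d) by (unfold d; destruct w, z; unfold Im; simpl; ring).
    assert (H := abs_snd_le d). assert (H2 : Rabs (snd d) < Im z) by lra. apply Rabs_def2 in H2. lra. }
  destruct (Gl_ex M h phi B n w W Hh Hb Hw) as [I1 _].
  destruct (Gl_ex M h phi B n z W Hh Hb ltac:(lra)) as [I2 _].
  destruct (Gl_ex M h phi B (S n) z W Hh Hb ltac:(lra)) as [I3 _].
  set (Fc := fun t => Cminus (Cminus (Iint phi n w t) (Iint phi n z t)) (Cmult d (Iint phi (S n) z t))).
  assert (HC : @is_RInt_gen C_R_NormedModule Fc (at_right 0) (Rbar_locally p_infty)
             (Cminus (Cminus (Gl phi n w) (Gl phi n z)) (Cmult d (Gl phi (S n) z)))).
  { apply is_RInt_gen_Cminus. apply is_RInt_gen_Cminus; auto. apply is_RInt_gen_Cmult; auto. }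
  set (k := 4 * Cmod d ^ 2).
  assert (Hk : 0 <= k) by (unfold k; apply Rmult_le_pos; [lra| apply pow2_ge_0]).
  set (D2 := Dn B h M (S (S n))). set (a2 := al h M (S (S n))). set (b2 := be h M (S (S n))).
  assert (m1 := mq_pos M (S (S n)) W). assert (m2 := mq_pos M (S (S (S n))) W). assert (m12 := mq_mono M (S (S n)) W).
  assert (Ha2 : 0 < a2) by (unfold a2, al; nra). assert (Hb2 : a2 < b2) by (unfold a2, b2, al, be; nra).
  destruct (ig_ex Fc (fun t => scal k (gmaj D2 a2 b2 t)) (scal k (Ign B h M (S (S n))))) as [l [Hl Hlb]].
  - intros x Hx. unfold Fc. apply cont_Cminus. apply cont_Cminus; apply cont_Iint; apply (proj1 Hb); auto.
    apply cont_Cmult. apply cont_Cconst. apply cont_Iint; apply (proj1 Hb); auto.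
  - intros x Hx. apply cont_Rmult. apply continuous_const. apply gmaj_cont; lra.
  - intros t Ht. unfold Fc.
    assert (E : Cminus (Cminus (Iint phi n w t) (Iint phi n z t)) (Cmult d (Iint phi (S n) z t))
      = Cmult (Iint phi n z t) (Cminus (Cminus (cexp (Cmult (Cmult Ci (RtoC t)) d)) (RtoC 1)) (Cmult (Cmult Ci (RtoC t)) d))).
    { unfold Iint, lap_integrand. cbn [cpow].
      replace (Cmult (Cmult Ci (RtoC t)) w) with (Cplus (Cmult (Cmult Ci (RtoC t)) z) (Cmult (Cmult Ci (RtoC t)) d)) by (unfold d; ring).
      rewrite cexp_add. ring. }
    rewrite E, Cmod_mult, Cmod_Iint by auto.
    eapply Rle_trans. apply Rmult_le_compat_l.
    { apply Rmult_le_pos. apply Rmult_le_pos. apply pow_le; lra. apply Cmod_ge_0. apply Rlt_le, exp_pos. }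
    apply cexp_taylor.
    rewrite Cmod_mult, Cmod_it, Rabs_right by lra.
    assert (B2 := maj_phi M h phi B (S (S n)) t W Hh Hb Ht). fold D2 a2 b2 in B2.
    assert (Ex : exp (- t * Im z) * exp (t * Cmod d) <= 1).
    { rewrite <- exp_plus, <- exp_0. destruct (Req_dec t 0). lra. left; apply exp_increasing. nra. }
    set (A := t ^ n * Cmod (phi t)).
    assert (HA : 0 <= A) by (unfold A; apply Rmult_le_pos; [apply pow_le; lra| apply Cmod_ge_0]).
    assert (E2 : t ^ S (S n) * Cmod (phi t) = t ^ 2 * A) by (unfold A; simpl; ring).
    rewrite E2 in B2.
    change (scal k (gmaj D2 a2 b2 t)) with (k * gmaj D2 a2 b2 t).
    unfold k.
    assert (0 <= exp (- t * Im z)) by (apply Rlt_le, exp_pos).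
    assert (0 <= exp (t * Cmod d)) by (apply Rlt_le, exp_pos).
    replace (A * exp (- t * Im z) * (4 * (t * Cmod d) ^ 2 * exp (t * Cmod d)))
      with (4 * Cmod d ^ 2 * (t ^ 2 * A) * (exp (- t * Im z) * exp (t * Cmod d))) by ring.
    assert (0 <= 4 * Cmod d ^ 2 * (t ^ 2 * A)) by (apply Rmult_le_pos; [apply Rmult_le_pos; [lra|apply pow2_ge_0]| apply Rmult_le_pos; [apply pow2_ge_0| auto]]).
    assert (0 <= Cmod d ^ 2) by apply pow2_ge_0.
    nra.
  - apply (is_RInt_gen_scal (V := R_NormedModule)). apply gmaj_int. lra.
  - assert (E1 := is_RInt_gen_unique (V := C_R_CompleteNormedModule) _ _ Hl).
    assert (E2 := is_RInt_gen_unique (V := C_R_CompleteNormedModule) _ _ HC).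
    rewrite E1 in E2. rewrite <- E2. exact Hlb.
Qed.

Lemma Gl_derive M h phi B n z : weight_seq M -> 0 < h -> CMh_bound M h phi B -> upper z ->
  @is_derive C_AbsRing C_NormedModule (Gl phi n) z (Gl phi (S n) z).
Proof.
  intros W Hh Hb Hz. unfold upper in Hz.
  set (Q := Ign B h M (S (S n))).
  assert (HQ : 0 <= Q).
  { destruct (Gl_ex M h phi B (S (S n)) z W Hh Hb ltac:(lra)) as [_ H].
    generalize (Cmod_ge_0 (Gl phi (S (S n)) z)). unfold Q; lra. }
  split. apply is_linear_scal_l.
  intros x Hx. apply (is_filter_lim_locally_unique (V := AbsRing_NormedModule C_AbsRing)) in Hx. subst x.
  intros eps.
  set (r := Rmin (Im z / 2) (eps / (4 * Q + 1))).
  assert (Hr : 0 < r).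
  { unfold r. apply Rmin_pos. lra. apply Rdiv_lt_0_compat. apply cond_pos. lra. }
  exists (mkposreal r Hr). intros w Hw. change (Cmod (Cminus w z) < r) in Hw.
  assert (Hwz : Cmod (Cminus w z) < Im z) by (generalize (Rmin_l (Im z / 2) (eps / (4 * Q + 1))); fold r; lra).
  assert (K := Gl_key M h phi B n z w W Hh Hb Hz Hwz). fold Q in K.
  change (Cmod (Cminus (Cminus (Gl phi n w) (Gl phi n z)) (Cmult (Cminus w z) (Gl phi (S n) z)))
     <= eps * Cmod (Cminus w z)).
  eapply Rle_trans. apply K.
  set (c := Cmod (Cminus w z)). assert (Hc : 0 <= c) by apply Cmod_ge_0.
  assert (Hc2 : c <= eps / (4 * Q + 1)) by (generalize (Rmin_r (Im z / 2) (eps / (4 * Q + 1))); fold r; unfold c; lra).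
  assert (Hc3 : c * (4 * Q + 1) <= eps) by (apply Rle_div_r in Hc2; [lra| lra] || (rewrite Rmult_comm; apply Rle_div_r; lra)).
  assert (4 * Q * c <= eps) by nra.
  replace (4 * c ^ 2 * Q) with (c * (4 * Q * c)) by ring.
  rewrite (Rmult_comm eps). apply Rmult_le_compat_l; auto.
Qed.

Lemma upper_loc (z : C) : upper z -> @locally (AbsRing_UniformSpace C_AbsRing) z upper.
Proof.
  intros Hz. unfold upper in *. exists (mkposreal (Im z) Hz). intros w Hw.
  change (Cmod (Cminus w z) < Im z) in Hw.
  assert (H := abs_snd_le (Cminus w z)). assert (H2 : Rabs (snd (Cminus w z)) < Im z) by lra.
  apply Rabs_def2 in H2. destruct w, z; unfold Im in *; simpl in *. lra.
Qed.

Lemma derivs_unique (f : C -> C) (g1 g2 : nat -> C -> C) :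
  derivs_on upper f g1 -> derivs_on upper f g2 ->
  forall n z, upper z -> g1 n z = g2 n z.
Proof.
  intros [A1 B1] [A2 B2] n. induction n as [|n IH]; intros z Hz.
  - rewrite A1, A2; auto.
  - assert (D1 := B1 n z Hz). assert (D2 := B2 n z Hz).
    assert (D1' : @is_derive C_AbsRing C_NormedModule (g2 n) z (g1 (S n) z)).
    { apply (is_derive_ext_loc (g1 n)); auto.
      generalize (upper_loc z Hz). apply filter_imp. intros w Hw. apply IH; auto. }
    apply is_C_derive_unique in D1'. apply is_C_derive_unique in D2. congruence.
Qed.

Lemma Iint0 phi z t : Iint phi 0 z t = lap_integrand phi z t.
Proof. unfold Iint. simpl. apply Cmult_1_l. Qed.

Lemma Gl_derivs M h phi B : weight_seq M -> 0 < h -> CMh_bound M h phi B ->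
  derivs_on upper (Laplace phi) (Gl phi).
Proof.
  intros W Hh Hb. split.
  - intros z Hz. unfold Gl, Laplace.
    apply (RInt_gen_ext (V := C_R_CompleteNormedModule) (Fa := at_right 0) (Fb := Rbar_locally p_infty)).
    { apply Filter_prod with (fun _ => True) (fun _ => True). apply filter_true. apply filter_true.
      intros; apply Iint0. }
    exists (Gl phi 0 z). apply (Gl_ex M h phi B 0 z W Hh Hb). unfold upper in Hz; lra.
  - intros n z Hz. apply (Gl_derive M h phi B); auto.
Qed.

Lemma lap_defined M h phi B : weight_seq M -> 0 < h -> CMh_bound M h phi B -> Laplace_defined phi.
Proof.
  intros W Hh Hb zeta Hz.
  apply (ex_RInt_gen_ext_eq (Iint phi 0 zeta)). apply Iint0.
  exists (Gl phi 0 zeta). apply (Gl_ex M h phi B 0 zeta W Hh Hb). unfold upper in Hz; lra.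
Qed.


Definition rk (x0 t : R) : R := (t / x0) * exp (1 - t / x0).

Lemma exp_pow_nat (a : R) (k : nat) : exp a ^ k = exp (INR k * a).
Proof.
  induction k. simpl. rewrite Rmult_0_l, exp_0. auto.
  rewrite S_INR. simpl. rewrite IHk, <- exp_plus. f_equal. ring.
Qed.

Lemma rk_pow x0 t k : 0 < x0 ->
  rk x0 t ^ k = (exp 1 / x0) ^ k * (t ^ k * exp (- t * (INR k / x0))).
Proof.
  intros Hx. unfold rk. rewrite Rpow_mult_distr, exp_pow_nat.
  assert (E : INR k * (1 - t / x0) = INR k * 1 + (- t * (INR k / x0))) by (field; lra).
  rewrite E, exp_plus, <- exp_pow_nat.
  unfold Rdiv. rewrite !Rpow_mult_distr. ring.
Qed.

Lemma rk_pos x0 t : 0 < x0 -> 0 < t -> 0 < rk x0 t.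
Proof. intros. unfold rk. apply Rmult_lt_0_compat. apply Rdiv_lt_0_compat; auto. apply exp_pos. Qed.

Lemma ue_le1 (u : R) : u * exp (1 - u) <= 1.
Proof.
  assert (H := exp_ineq1_le (u - 1)).
  assert (E : exp (u - 1) * exp (1 - u) = 1) by (rewrite <- exp_plus; replace (u - 1 + (1 - u)) with 0 by ring; apply exp_0).
  assert (0 < exp (1 - u)) by apply exp_pos. nra.
Qed.

Lemma rk_le1 x0 t : rk x0 t <= 1.
Proof. apply ue_le1. Qed.

Definition rho (d : R) := Rmax ((1 + d) * exp (- d)) ((1 - d) * exp d).

Lemma rho_lt1 d : 0 < d -> rho d < 1.
Proof.
  intros Hd. unfold rho. apply Rmax_lub_lt.
  - assert (H := exp_ineq1 d ltac:(lra)).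
    assert (E : exp d * exp (- d) = 1) by (rewrite <- exp_plus; replace (d + - d) with 0 by ring; apply exp_0).
    assert (0 < exp (- d)) by apply exp_pos. nra.
  - assert (H := exp_ineq1 (- d) ltac:(lra)).
    assert (E : exp d * exp (- d) = 1) by (rewrite <- exp_plus; replace (d + - d) with 0 by ring; apply exp_0).
    assert (0 < exp d) by apply exp_pos. nra.
Qed.

Lemma rho_pos d : 0 < d -> d < 1 -> 0 < rho d.
Proof.
  intros. unfold rho. eapply Rlt_le_trans. 2: apply Rmax_l.
  apply Rmult_lt_0_compat. lra. apply exp_pos.
Qed.

Lemma ue_far (u d : R) : 0 < d < 1 -> 0 < u -> d <= Rabs (u - 1) -> u * exp (1 - u) <= rho d.
Proof.
  intros Hd Hu Hud. unfold rho.
  destruct (Rle_dec 1 u).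
  - rewrite Rabs_right in Hud by lra.
    eapply Rle_trans. 2: apply Rmax_l.
    set (v := u / (1 + d)). assert (Hv : 1 <= v) by (unfold v; apply Rle_div_r; lra).
    replace u with ((1 + d) * v) by (unfold v; field; lra).
    replace (1 - (1 + d) * v) with ((1 - v) + - (d * v)) by ring.
    rewrite exp_plus.
    assert (A1 := ue_le1 v).
    assert (A2 : exp (- (d * v)) <= exp (- d)) by (destruct (Req_dec v 1) as [->|]; [right; f_equal; ring| left; apply exp_increasing; nra]).
    assert (0 < exp (1 - v)) by apply exp_pos. assert (0 < exp (- (d * v))) by apply exp_pos.
    assert (0 < exp (- d)) by apply exp_pos.
    replace ((1 + d) * v * (exp (1 - v) * exp (- (d * v)))) with ((1 + d) * ((v * exp (1 - v)) * exp (- (d * v)))) by ring.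
    apply Rmult_le_compat_l. lra.
    assert (0 <= v * exp (1 - v)) by (apply Rmult_le_pos; lra).
    nra.
  - rewrite Rabs_left in Hud by lra.
    eapply Rle_trans. 2: apply Rmax_r.
    set (v := u / (1 - d)). assert (Hv : v <= 1) by (unfold v; apply Rle_div_l; lra).
    assert (Hv0 : 0 < v) by (unfold v; apply Rdiv_lt_0_compat; lra).
    replace u with ((1 - d) * v) by (unfold v; field; lra).
    replace (1 - (1 - d) * v) with ((1 - v) + (d * v)) by ring.
    rewrite exp_plus.
    assert (A1 := ue_le1 v).
    assert (A2 : exp (d * v) <= exp d) by (destruct (Req_dec v 1) as [->|]; [right; f_equal; ring| left; apply exp_increasing; nra]).
    assert (0 < exp (1 - v)) by apply exp_pos. assert (0 < exp (d * v)) by apply exp_pos.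
    replace ((1 - d) * v * (exp (1 - v) * exp (d * v))) with ((1 - d) * ((v * exp (1 - v)) * exp (d * v))) by ring.
    apply Rmult_le_compat_l. lra.
    assert (0 <= v * exp (1 - v)) by (apply Rmult_le_pos; lra).
    nra.
Qed.

Lemma ue_near (u d1 : R) : 0 < d1 <= 1 -> Rabs (u - 1) <= d1 -> 1 - d1 <= u * exp (1 - u).
Proof.
  intros Hd Hu. generalize (Rle_abs (u - 1)) (Rle_abs (- (u - 1))); rewrite Rabs_Ropp; intros Hu1 Hu2.
  assert (H := exp_ineq1_le (1 - u)).
  assert (u * (2 - u) <= u * exp (1 - u)) by (apply Rmult_le_compat_l; lra).
  nra.
Qed.

Lemma ue_maj (x0 t : R) : 0 < x0 -> 0 < t ->
  rk x0 t <= gmaj (3 * exp 1 * (3 * x0 + 1) * (3 * x0 + 2)) 1 2 t.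
Proof.
  intros Hx Ht. unfold rk, gmaj. set (u := t / x0).
  assert (Hu : 0 < u) by (unfold u; apply Rdiv_lt_0_compat; auto).
  assert (Et : t = x0 * u) by (unfold u; field; lra).
  apply (Rle_div_r (u * exp (1 - u)) _ ((t + 1) * (t + 2))). apply Rmult_lt_0_compat; lra.
  assert (E3 := exp_ineq1_le (u / 3)).
  assert (Eu : exp u = exp (u / 3) ^ 3) by (rewrite exp_pow_nat; f_equal; simpl; field).
  assert (Hc : (1 + u / 3) ^ 3 <= exp u).
  { rewrite Eu. apply pow_incr. split; lra. }
  assert (E1u : exp (1 - u) * exp u = exp 1) by (rewrite <- exp_plus; f_equal; ring).
  assert (P1 : u <= 3 * (1 + u / 3)) by lra.
  assert (P2 : t + 1 <= (3 * x0 + 1) * (1 + u / 3)) by (rewrite Et; nra).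
  assert (P3 : t + 2 <= (3 * x0 + 2) * (1 + u / 3)) by (rewrite Et; nra).
  assert (Q : u * ((t + 1) * (t + 2)) <= 3 * (3 * x0 + 1) * (3 * x0 + 2) * (1 + u / 3) ^ 3).
  { replace (3 * (3 * x0 + 1) * (3 * x0 + 2) * (1 + u / 3) ^ 3) with
      ((3 * (1 + u / 3)) * (((3 * x0 + 1) * (1 + u / 3)) * ((3 * x0 + 2) * (1 + u / 3)))) by ring.
    apply Rmult_le_compat; try lra. apply Rmult_le_pos; lra.
    apply Rmult_le_compat; lra. }
  assert (Q2 : u * ((t + 1) * (t + 2)) <= 3 * (3 * x0 + 1) * (3 * x0 + 2) * exp u).
  { eapply Rle_trans. apply Q. apply Rmult_le_compat_l. nra. auto. }
  assert (0 < exp (1 - u)) by apply exp_pos.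
  replace (u * exp (1 - u) * ((t + 1) * (t + 2))) with (exp (1 - u) * (u * ((t + 1) * (t + 2)))) by ring.
  replace (3 * exp 1 * (3 * x0 + 1) * (3 * x0 + 2)) with (exp (1 - u) * (3 * (3 * x0 + 1) * (3 * x0 + 2) * exp u)) by (rewrite <- E1u; ring).
  apply Rmult_le_compat_l; lra.
Qed.

Lemma rk_cont x0 t : 0 < x0 -> continuous (rk x0) t.
Proof.
  intros Hx. unfold rk. apply (ex_derive_continuous (K := R_AbsRing) (V := R_NormedModule)). auto_derive. lra.
Qed.

Lemma is_RInt_gen_fst (f : R -> C) (l : C) :
  @is_RInt_gen C_R_NormedModule f (at_right 0) (Rbar_locally p_infty) l ->
  @is_RInt_gen R_NormedModule (fun t => fst (f t)) (at_right 0) (Rbar_locally p_infty) (fst l).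
Proof.
  intros H P HP.
  assert (Hc : continuous (fun v : C => fst v) l) by (apply cont_fst, cont_Cid).
  assert (HP' := Hc P HP).
  assert (Hf := H _ HP'). unfold filtermapi in *.
  revert Hf. apply filter_imp. intros ab [y [Hy1 Hy2]].
  exists (fst y). split; auto.
  apply (is_RInt_fct_extend_fst (U := R_NormedModule) (V := R_NormedModule)); auto.
Qed.

Lemma igen_ge_sub (g : R -> R) (Ig c d : R) :
  (forall x, 0 < x -> continuous g x) -> (forall x, 0 < x -> 0 <= g x) ->
  is_RInt_gen g (at_right 0) (Rbar_locally p_infty) Ig -> 0 < c <= d ->
  RInt g c d <= Ig.
Proof.
  intros Hg Hg0 Hgi Hcd.
  assert (exg : forall a b, 0 < a -> 0 < b -> ex_RInt g a b).
  { intros a b Ha Hb. apply (ex_RInt_continuous (V := R_CompleteNormedModule)). intros z Hz. apply Hg.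
    destruct (Rle_dec a b); [rewrite Rmin_left in Hz by lra|rewrite Rmin_right in Hz by lra]; lra. }
  apply le_epsilon. intros eps Heps.
  destruct (Hgi (ball Ig eps)) as [Q Rr HQ HR HQR].
  { apply (locally_ball Ig (mkposreal _ Heps)). }
  destruct (at_right0_elim _ HQ) as [dl [Hd HQd]].
  destruct HR as [M HM].
  set (a := Rmin dl c / 2). set (b := Rmax M d + 1).
  assert (Ha : 0 < a) by (unfold a; assert (0 < Rmin dl c) by (apply Rmin_pos; lra); lra).
  assert (Hac : a < c) by (unfold a; generalize (Rmin_r dl c) (Rmin_pos dl c Hd ltac:(lra)); lra).
  assert (Had : a < dl) by (unfold a; generalize (Rmin_l dl c) (Rmin_pos dl c Hd ltac:(lra)); lra).
  assert (Hbd : d < b) by (unfold b; generalize (Rmax_r M d); lra).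
  assert (HbM : M < b) by (unfold b; generalize (Rmax_l M d); lra).
  destruct (HQR a b) as [y [Hy1 Hy2]]. apply HQd; lra. apply HM; lra.
  simpl in Hy1. change (Rabs (y - Ig) < eps) in Hy2. rewrite <- (is_RInt_unique _ _ _ _ Hy1) in Hy2.
  apply Rabs_def2 in Hy2.
  assert (E : RInt g a b = RInt g a c + (RInt g c d + RInt g d b)).
  { rewrite <- (RInt_Chasles (V := R_CompleteNormedModule) g a c b) by (apply exg; lra).
    rewrite <- (RInt_Chasles (V := R_CompleteNormedModule) g c d b) by (apply exg; lra). reflexivity. }
  assert (0 <= RInt g a c) by (apply RInt_ge_0; [lra| apply exg; lra| intros; apply Hg0; lra]).
  assert (0 <= RInt g d b) by (apply RInt_ge_0; [lra| apply exg; lra| intros; apply Hg0; lra]).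
  lra.
Qed.

Lemma pow_le_self (r : R) (k : nat) : 0 <= r <= 1 -> (1 <= k)%nat -> r ^ k <= r.
Proof.
  intros Hr Hk. destruct k. lia. simpl.
  assert (r ^ k <= 1) by (rewrite <- (pow1 k); apply pow_incr; lra).
  assert (0 <= r ^ k) by (apply pow_le; lra). nra.
Qed.

Lemma cont_pow (f : R -> R) k x : continuous f x -> continuous (fun t => f t ^ k) x.
Proof.
  intros Hf. induction k; simpl. apply continuous_const. apply cont_Rmult; auto.
Qed.

Definition Dr (x0 : R) := 3 * exp 1 * (3 * x0 + 1) * (3 * x0 + 2).

Lemma kernel_int x0 k : 0 < x0 -> (1 <= k)%nat ->
  exists lk : C, @is_RInt_gen C_R_NormedModule (fun t => RtoC (rk x0 t ^ k)) (at_right 0) (Rbar_locally p_infty) lk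
   /\ is_RInt_gen (fun t => rk x0 t ^ k) (at_right 0) (Rbar_locally p_infty) (fst lk).
Proof.
  intros Hx Hk.
  destruct (ig_ex (fun t => RtoC (rk x0 t ^ k)) (gmaj (Dr x0) 1 2)
     (Dr x0 * ln (2 / 1) / (2 - 1))) as [l [Hl _]].
  - intros x Hx0. apply cont_RtoC. apply cont_pow. apply rk_cont; auto.
  - intros x Hx0. apply gmaj_cont; lra.
  - intros x Hx0. rewrite Cmod_R. assert (H1 := rk_pos x0 x Hx Hx0). assert (H2 := rk_le1 x0 x).
    rewrite Rabs_right by (apply Rle_ge, pow_le; lra).
    eapply Rle_trans. 2: apply ue_maj; auto.
    apply pow_le_self; auto; lra.
  - apply gmaj_int. lra.
  - exists l. split; auto. apply (is_RInt_gen_fst _ _ Hl).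
Qed.


Lemma cpow_mul a b k : cpow (Cmult a b) k = Cmult (cpow a k) (cpow b k).
Proof. induction k; simpl. rewrite Cmult_1_l; auto. rewrite IHk. ring. Qed.

Lemma cpow_RtoC t k : cpow (RtoC t) k = RtoC (t ^ k).
Proof. induction k; simpl. auto. rewrite IHk, RtoC_mult. auto. Qed.

Lemma cpow_one k : cpow (RtoC 1) k = RtoC 1.
Proof. induction k; simpl. auto. rewrite IHk. ring. Qed.

Lemma lapexp_real t s : cexp (Cmult (Cmult Ci (RtoC t)) (0, s)) = RtoC (exp (- t * s)).
Proof.
  replace (Cmult (Cmult Ci (RtoC t)) (0, s)) with ((- t * s, 0) : C) by (unfold Cmult, Ci, RtoC; simpl; f_equal; ring).
  unfold cexp, RtoC, Re, Im; simpl. rewrite cos_0, sin_0. f_equal; ring.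
Qed.

Lemma moment_zero M phi1 phi2 h1 h2 B1 B2 x0 k : weight_seq M ->
  0 < h1 -> CMh_bound M h1 phi1 B1 -> 0 < h2 -> CMh_bound M h2 phi2 B2 ->
  (forall z, upper z -> Laplace phi1 z = Laplace phi2 z) -> 0 < x0 -> (1 <= k)%nat ->
  @is_RInt_gen C_R_NormedModule (fun t => Cmult (RtoC (rk x0 t ^ k)) (Cminus (phi1 t) (phi2 t)))
    (at_right 0) (Rbar_locally p_infty) (RtoC 0).
Proof.
  intros W Hh1 Hb1 Hh2 Hb2 HL Hx Hk.
  set (s := INR k / x0). set (z := (0, s) : C).
  assert (Hs : 0 < s) by (unfold s; apply Rdiv_lt_0_compat; auto; apply lt_0_INR; lia).
  assert (Hz : upper z) by (unfold upper, z, Im; simpl; lra).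
  assert (D1 := Gl_derivs M h1 phi1 B1 W Hh1 Hb1).
  assert (D2 := Gl_derivs M h2 phi2 B2 W Hh2 Hb2).
  assert (D2' : derivs_on upper (Laplace phi1) (Gl phi2)).
  { destruct D2 as [A2 B2']. split; auto. intros w Hw. rewrite A2, HL; auto. }
  assert (EqG := derivs_unique _ _ _ D1 D2' k z Hz).
  destruct (Gl_ex M h1 phi1 B1 k z W Hh1 Hb1 ltac:(unfold z, Im; simpl; lra)) as [I1 _].
  destruct (Gl_ex M h2 phi2 B2 k z W Hh2 Hb2 ltac:(unfold z, Im; simpl; lra)) as [I2 _].
  set (c := Cmult (RtoC ((exp 1 / x0) ^ k)) (cpow (Copp Ci) k)).
  assert (HC := is_RInt_gen_Cmult c _ _ (is_RInt_gen_Cminus _ _ _ _ I1 I2)).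
  rewrite EqG in HC.
  replace (Cmult c (Cminus (Gl phi2 k z) (Gl phi2 k z))) with (RtoC 0) in HC by ring.
  revert HC. apply is_RInt_gen_ext.
  apply Filter_prod with (fun _ => True) (fun _ => True). apply filter_true. apply filter_true.
  intros a b _ _ t _.
  match goal with |- ?a = ?b => change (@eq C a b) end.
  unfold Iint, lap_integrand, z. rewrite lapexp_real, cpow_mul, cpow_RtoC, rk_pow by auto.
  fold s. unfold c.
  assert (PQ : Cmult (cpow (Copp Ci) k) (cpow Ci k) = RtoC 1).
  { rewrite <- cpow_mul. replace (Cmult (Copp Ci) Ci) with (RtoC 1) by (unfold Cmult, Copp, Ci, RtoC; simpl; f_equal; ring).
    apply cpow_one. }
  rewrite !RtoC_mult.
  transitivity (Cmult (Cmult (RtoC ((exp 1 / x0) ^ k)) (Cmult (cpow (Copp Ci) k) (cpow Ci k)))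
     (Cmult (Cmult (RtoC (t ^ k)) (RtoC (exp (- t * s)))) (Cminus (phi1 t) (phi2 t)))).
  ring. rewrite PQ. ring.
Qed.

Lemma ball_C_Cmod (a b : C) (e : R) : @ball C_UniformSpace a e b -> Cmod (Cminus b a) < 2 * e.
Proof.
  intros [H1 H2]. destruct a as [a1 a2], b as [b1 b2]. simpl in *.
  change (Rabs (b1 + - a1) < e) in H1. change (Rabs (b2 + - a2) < e) in H2.
  eapply Rle_lt_trans. apply Cmod_le_sum. simpl. lra.
Qed.

Lemma inj_main M phi1 phi2 h1 h2 B1 B2 x0 : weight_seq M ->
  0 < h1 -> CMh_bound M h1 phi1 B1 -> 0 < h2 -> CMh_bound M h2 phi2 B2 ->
  (forall z, upper z -> Laplace phi1 z = Laplace phi2 z) -> 0 < x0 ->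
  forall eps, 0 < eps -> Cmod (Cminus (phi1 x0) (phi2 x0)) <= 2 * eps.
Proof.
  intros W Hh1 Hb1 Hh2 Hb2 HL Hx eps Heps.
  set (psi := fun t => Cminus (phi1 t) (phi2 t)).
  change (Cmod (psi x0) <= 2 * eps).
  set (A := B1 + B2).
  assert (HB1 := B_nonneg _ _ _ _ W Hb1). assert (HB2 := B_nonneg _ _ _ _ W Hb2).
  assert (HA : 0 <= A) by (unfold A; lra).
  assert (Hpsi : forall t, 0 < t -> Cmod (psi t) <= A).
  { intros t Ht. destruct Hb1 as [_ P1]. destruct Hb2 as [_ P2].
    assert (Q1 := P1 O t Ht). assert (Q2 := P2 O t Ht). simpl in Q1, Q2.
    rewrite (proj1 (proj2 W)) in Q1, Q2.
    unfold psi, Cminus. eapply Rle_trans. apply Cmod_triangle. rewrite Cmod_opp. unfold A; lra. }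
  assert (Hcpsi : forall t, 0 < t -> continuous psi t).
  { intros t Ht. apply cont_Cminus. apply (proj1 Hb1); auto. apply (proj1 Hb2); auto. }
  assert (He2 : 0 < eps / 2) by lra.
  assert (Hc := proj1 (filterlim_locally psi (psi x0)) (Hcpsi x0 Hx) (mkposreal _ He2)).
  destruct Hc as [dl Hdl].
  assert (Hnear : forall t, Rabs (t - x0) < dl -> Cmod (Cminus (psi x0) (psi t)) < eps).
  { intros t Ht. assert (H := Hdl t Ht). apply ball_C_Cmod in H. simpl in H.
    replace (Cminus (psi x0) (psi t)) with (Copp (Cminus (psi t) (psi x0))) by ring.
    rewrite Cmod_opp. lra. }
  set (dp := Rmin dl (x0 / 2)).
  assert (Hdp : 0 < dp) by (unfold dp; apply Rmin_pos; [apply cond_pos| lra]).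
  assert (Hdp1 : dp <= dl) by apply Rmin_l. assert (Hdp2 : dp <= x0 / 2) by apply Rmin_r.
  set (d := dp / x0).
  assert (Hd : 0 < d < 1).
  { unfold d. split. apply Rdiv_lt_0_compat; lra. apply Rlt_div_l; lra. }
  set (rh := rho d).
  assert (Hrh : 0 < rh < 1) by (split; [apply rho_pos; lra| apply rho_lt1; lra]).
  set (sg := (1 + rh) / 2). set (d1 := 1 - sg).
  assert (Hd1 : 0 < d1 <= 1) by (unfold d1, sg; lra).
  assert (Far : forall t, 0 < t -> dp <= Rabs (t - x0) -> rk x0 t <= rh).
  { intros t Ht Htd. unfold rk. apply ue_far. lra. apply Rdiv_lt_0_compat; auto.
    replace (t / x0 - 1) with ((t - x0) / x0) by (field; lra).
    unfold Rdiv at 1. rewrite Rabs_mult, Rabs_inv, (Rabs_right x0) by lra.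
    unfold d. unfold Rdiv. apply Rmult_le_compat_r. apply Rlt_le, Rinv_0_lt_compat; lra. auto. }
  assert (Near : forall t, Rabs (t - x0) <= x0 * d1 -> sg <= rk x0 t).
  { intros t Ht. unfold rk. replace sg with (1 - d1) by (unfold d1; ring). apply ue_near; auto.
    replace (t / x0 - 1) with ((t - x0) / x0) by (field; lra).
    unfold Rdiv at 1. rewrite Rabs_mult, Rabs_inv, (Rabs_right x0) by lra.
    apply Rle_div_l. lra. unfold Rdiv in *. lra. }
  destruct (kernel_int x0 1 Hx (le_n 1)) as [l1 [Hl1 HI1]].
  set (I1 := fst l1).
  assert (Hsg : 0 < sg < 1) by (unfold sg; lra).
  set (q := rh / sg).
  assert (Hq : 0 < q < 1) by (unfold q, sg; split; [apply Rdiv_lt_0_compat; lra| apply Rlt_div_l; lra]).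
  assert (HI1p : 0 <= I1).
  { eapply Rle_trans. 2: apply (igen_ge_sub (fun t => rk x0 t ^ 1) I1 x0 x0); auto.
    right. symmetry. apply (RInt_point (V := R_CompleteNormedModule)).
    intros; apply cont_pow, rk_cont; auto. intros; apply pow_le; apply Rlt_le, rk_pos; auto. lra. }
  set (tgt := eps * (2 * x0 * d1) * rh / (2 * A * I1 + 1)).
  assert (Htgt : 0 < tgt).
  { unfold tgt. apply Rdiv_lt_0_compat. apply Rmult_lt_0_compat; [apply Rmult_lt_0_compat; nra| lra]. nra. }
  destruct (pow_lt_1_zero q ltac:(rewrite Rabs_right; lra) tgt Htgt) as [N HN].
  set (k := S N).
  assert (Hk : (1 <= k)%nat) by (unfold k; lia).
  assert (Hqk : q ^ k <= tgt) by (generalize (HN k ltac:(unfold k; lia)); rewrite Rabs_right; [lra| apply Rle_ge, pow_le; lra]).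
  destruct (kernel_int x0 k Hx Hk) as [lk [Hlk HIk]].
  set (Ik := fst lk).
  assert (HIk_low : (2 * x0 * d1) * sg ^ k <= Ik).
  { eapply Rle_trans. 2: apply (igen_ge_sub (fun t => rk x0 t ^ k) Ik (x0 * (1 - d1)) (x0 * (1 + d1))); auto.
    - replace ((2 * x0 * d1) * sg ^ k) with (RInt (fun _ => sg ^ k) (x0 * (1 - d1)) (x0 * (1 + d1))).
      2:{ rewrite RInt_const. simpl. unfold scal; simpl. unfold mult; simpl. ring. }
      apply RInt_le. nra. apply ex_RInt_const.
      apply (ex_RInt_continuous (V := R_CompleteNormedModule)). intros; apply cont_pow, rk_cont; auto.
      intros t Ht. apply pow_incr. split. lra. apply Near. apply Rabs_le; nra.
    - intros; apply cont_pow, rk_cont; auto.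
    - intros; apply pow_le; apply Rlt_le, rk_pos; auto.
    - assert (d1 < 1) by (unfold d1; lra). split; nra. }
  assert (HIkp : 0 < Ik).
  { eapply Rlt_le_trans. 2: apply HIk_low. apply Rmult_lt_0_compat. nra. apply pow_lt; lra. }
  assert (HZ := moment_zero M phi1 phi2 h1 h2 B1 B2 x0 k W Hh1 Hb1 Hh2 Hb2 HL Hx Hk).
  assert (HG := is_RInt_gen_Cminus _ _ _ _ (is_RInt_gen_Cmult (psi x0) _ _ Hlk) HZ).
  set (cc := 2 * A * rh ^ (k - 1)).
  assert (Hcc : 0 <= cc) by (unfold cc; apply Rmult_le_pos; [lra| apply pow_le; lra]).
  assert (Hmaj : is_RInt_gen (fun t => plus (scal eps (rk x0 t ^ k)) (scal cc (rk x0 t ^ 1)))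
                   (at_right 0) (Rbar_locally p_infty) (plus (scal eps Ik) (scal cc I1))).
  { apply (is_RInt_gen_plus (V := R_NormedModule)); apply (is_RInt_gen_scal (V := R_NormedModule)); auto. }
  destruct (ig_ex (fun t => Cminus (Cmult (psi x0) (RtoC (rk x0 t ^ k)))
           (Cmult (RtoC (rk x0 t ^ k)) (Cminus (phi1 t) (phi2 t))))
           (fun t => plus (scal eps (rk x0 t ^ k)) (scal cc (rk x0 t ^ 1)))
           (plus (scal eps Ik) (scal cc I1))) as [l' [Hl' Hl'b]].
  - intros x Hx0. apply cont_Cminus. apply cont_Cmult. apply cont_Cconst.
    apply cont_RtoC, cont_pow, rk_cont; auto.
    apply cont_Cmult. apply cont_RtoC, cont_pow, rk_cont; auto.
    apply cont_Cminus. apply (proj1 Hb1); auto. apply (proj1 Hb2); auto.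
  - intros x Hx0. change (continuous (fun t => eps * rk x0 t ^ k + cc * rk x0 t ^ 1) x).
    apply cont_Rplus; apply cont_Rmult; try apply continuous_const; apply cont_pow, rk_cont; auto.
  - intros t Ht. change (Cmod (Cminus (Cmult (psi x0) (RtoC (rk x0 t ^ k)))
           (Cmult (RtoC (rk x0 t ^ k)) (Cminus (phi1 t) (phi2 t)))) <= eps * rk x0 t ^ k + cc * rk x0 t ^ 1).
    replace (Cminus (Cmult (psi x0) (RtoC (rk x0 t ^ k))) (Cmult (RtoC (rk x0 t ^ k)) (Cminus (phi1 t) (phi2 t))))
      with (Cmult (RtoC (rk x0 t ^ k)) (Cminus (psi x0) (psi t))) by (unfold psi; ring).
    assert (Hr := rk_pos x0 t Hx Ht). assert (Hr1 := rk_le1 x0 t).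
    assert (Hrk : 0 <= rk x0 t ^ k) by (apply pow_le; lra).
    rewrite Cmod_mult, Cmod_R, Rabs_right by lra.
    assert (Hcm := Cmod_ge_0 (Cminus (psi x0) (psi t))).
    assert (0 <= cc * rk x0 t ^ 1) by (apply Rmult_le_pos; auto; apply pow_le; lra).
    destruct (Rlt_le_dec (Rabs (t - x0)) dp) as [Hlt|Hge].
    + assert (Hn := Hnear t ltac:(lra)).
      assert (rk x0 t ^ k * Cmod (Cminus (psi x0) (psi t)) <= rk x0 t ^ k * eps) by (apply Rmult_le_compat_l; lra).
      lra.
    + assert (Hf := Far t Ht Hge).
      assert (H2A : Cmod (Cminus (psi x0) (psi t)) <= 2 * A).
      { unfold Cminus. eapply Rle_trans. apply Cmod_triangle. rewrite Cmod_opp.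
        generalize (Hpsi x0 Hx) (Hpsi t Ht). lra. }
      assert (HrN : rk x0 t ^ N <= rh ^ N) by (apply pow_incr; lra).
      unfold cc, k. simpl (S N - 1)%nat. rewrite Nat.sub_0_r.
      change (rk x0 t ^ S N) with (rk x0 t * rk x0 t ^ N). simpl (rk x0 t ^ 1).
      assert (0 <= rk x0 t ^ N) by (apply pow_le; lra).
      assert (rk x0 t * rk x0 t ^ N * Cmod (Cminus (psi x0) (psi t)) <= rk x0 t * rk x0 t ^ N * (2 * A))
        by (apply Rmult_le_compat_l; [apply Rmult_le_pos; lra| auto]).
      assert (rk x0 t * rk x0 t ^ N * (2 * A) <= rk x0 t * rh ^ N * (2 * A))
        by (apply Rmult_le_compat_r; [lra| apply Rmult_le_compat_l; lra]).
      assert (0 <= eps * (rk x0 t * rk x0 t ^ N)) by (apply Rmult_le_pos; [lra| apply Rmult_le_pos; lra]).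
      replace (2 * A * rh ^ N * (rk x0 t * 1)) with (rk x0 t * rh ^ N * (2 * A)) by ring.
      lra.
  - exact Hmaj.
  - assert (El : l' = Cminus (Cmult (psi x0) lk) (RtoC 0)).
    { rewrite <- (is_RInt_gen_unique (V := C_R_CompleteNormedModule) _ _ Hl').
      apply (is_RInt_gen_unique (V := C_R_CompleteNormedModule)). exact HG. }
    rewrite El in Hl'b.
    change (Cmod (Cminus (Cmult (psi x0) lk) (RtoC 0)) <= eps * Ik + cc * I1) in Hl'b.
    replace (Cminus (Cmult (psi x0) lk) (RtoC 0)) with (Cmult (psi x0) lk) in Hl'b by ring.
    rewrite Cmod_mult in Hl'b.
    assert (HlkI : Ik <= Cmod lk) by (unfold Ik; eapply Rle_trans; [apply Rle_abs| apply abs_fst_le]).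
    assert (Hpc := Cmod_ge_0 (psi x0)).
    assert (Hm1 : Cmod (psi x0) * Ik <= eps * Ik + cc * I1).
    { eapply Rle_trans. 2: apply Hl'b. apply Rmult_le_compat_l; auto. }
    assert (Hqs : q * sg = rh) by (unfold q; field; lra).
    assert (Hrk : rh ^ k = q ^ k * sg ^ k) by (rewrite <- Hqs, Rpow_mult_distr; auto).
    assert (Hqk0 : 0 <= q ^ k) by (apply pow_le; lra).
    assert (Hsgk : 0 < sg ^ k) by (apply pow_lt; lra).
    assert (T1 : 2 * A * I1 * q ^ k <= eps * (2 * x0 * d1) * rh).
    { assert (0 <= 2 * A * I1) by nra.
      assert ((2 * A * I1) * q ^ k <= (2 * A * I1 + 1) * tgt) by (apply Rmult_le_compat; lra).
      unfold tgt in H0. replace ((2 * A * I1 + 1) * (eps * (2 * x0 * d1) * rh / (2 * A * I1 + 1)))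
        with (eps * (2 * x0 * d1) * rh) in H0 by (field; lra). lra. }
    assert (T2 : 2 * A * I1 * rh ^ k <= eps * rh * Ik).
    { rewrite Hrk. 
      assert (2 * A * I1 * q ^ k * sg ^ k <= eps * (2 * x0 * d1) * rh * sg ^ k) by (apply Rmult_le_compat_r; lra).
      assert (eps * rh * (2 * x0 * d1 * sg ^ k) <= eps * rh * Ik) by (apply Rmult_le_compat_l; [nra| auto]).
      nra. }
    assert (T3 : cc * I1 <= eps * Ik).
    { unfold cc, k in *. simpl (S N - 1)%nat. rewrite Nat.sub_0_r.
      change (rh ^ S N) with (rh * rh ^ N) in T2.
      assert (rh * (2 * A * I1 * rh ^ N) <= rh * (eps * Ik)) by (replace (rh * (2 * A * I1 * rh ^ N)) with (2 * A * I1 * (rh * rh ^ N)) by ring; lra).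
      apply Rmult_le_reg_l in H; lra. }
    assert (Cmod (psi x0) * Ik <= (2 * eps) * Ik) by lra.
    apply Rmult_le_reg_r in H; lra.
Qed.

Lemma inj_lemma (M : nat -> R) : weight_seq M ->
  (forall phi1 phi2, in_CM M phi1 -> in_CM M phi2 ->
     (forall z, upper z -> Laplace phi1 z = Laplace phi2 z) ->
     forall x, 0 < x -> phi1 x = phi2 x).
Proof.
  intros W phi1 phi2 [h1 [Hh1 [B1 Hb1]]] [h2 [Hh2 [B2 Hb2]]] HL x Hx.
  assert (H0 : Cmod (Cminus (phi1 x) (phi2 x)) <= 0).
  { apply le_epsilon. intros eps Heps. rewrite Rplus_0_l.
    replace eps with (2 * (eps / 2)) by field.
    apply (inj_main M phi1 phi2 h1 h2 B1 B2 x); auto. lra. }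
  assert (E : Cmod (Cminus (phi1 x) (phi2 x)) = 0) by (generalize (Cmod_ge_0 (Cminus (phi1 x) (phi2 x))); lra).
  apply Cmod_eq_0 in E.
  replace (phi1 x) with (Cplus (Cminus (phi1 x) (phi2 x)) (phi2 x)) by ring.
  rewrite E. ring.
Qed.


Theorem lemma2p12 (M : nat -> R) (C0 H : R) :
  weight_seq M -> 0 < C0 -> 1 < H -> cond_sm M C0 H ->
  (forall h : R, 0 < h ->
     (forall phi, in_CMh M h phi ->
        Laplace_defined phi /\ in_ANh (shift1 M) (H * h) (Laplace phi)) /\
     (exists K : R, 0 <= K /\
        forall (phi : R -> C) (B : R), CMh_bound M h phi B ->
        forall g, derivs_on upper (Laplace phi) g ->
        forall (p : nat) (z : C), upper z ->
          Cmod (g p z) <= K * B * (H * h) ^ p * shift1 M p)) /\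
  (forall phi, in_CM M phi -> Laplace_defined phi /\ in_AN (shift1 M) (Laplace phi)) /\
  (forall phi1 phi2, in_CM M phi1 -> in_CM M phi2 ->
     (forall z, upper z -> Laplace phi1 z = Laplace phi2 z) ->
     forall x, 0 < x -> phi1 x = phi2 x).
Proof.
  intros W HC0 HH Hsm.
  assert (P1 : forall h, 0 < h -> forall phi, in_CMh M h phi ->
        Laplace_defined phi /\ in_ANh (shift1 M) (H * h) (Laplace phi)).
  { intros h Hh phi [B Hb]. split. apply (lap_defined M h phi B); auto.
    exists (Gl phi). split. apply (Gl_derivs M h phi B); auto.
    exists (6 * h * (1 + C0 * H) * B). intros p z Hz.
    destruct (Gl_ex M h phi B p z W Hh Hb) as [_ Hbd]. unfold upper in Hz; lra.
    eapply Rle_trans. apply Hbd. eapply Rle_trans. apply (Ign_bound M C0 H h phi B p); auto.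
    unfold shift1. right; ring. }
  split; [|split].
  - intros h Hh. split. apply P1; auto.
    exists (6 * h * (1 + C0 * H)). split.
    { apply Rmult_le_pos. lra. assert (0 < C0 * H) by (apply Rmult_lt_0_compat; lra). lra. }
    intros phi B Hb g Hg p z Hz.
    rewrite (derivs_unique (Laplace phi) g (Gl phi) Hg (Gl_derivs M h phi B W Hh Hb) p z Hz).
    destruct (Gl_ex M h phi B p z W Hh Hb) as [_ Hbd]. unfold upper in Hz; lra.
    eapply Rle_trans. apply Hbd. eapply Rle_trans. apply (Ign_bound M C0 H h phi B p); auto.
    unfold shift1. right; ring.
  - intros phi [h [Hh Hphi]]. destruct (P1 h Hh phi Hphi) as [A B]. split; auto.
    exists (H * h). split; auto. apply Rmult_lt_0_compat; lra.
  - apply inj_lemma; auto.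
Qed.
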